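(* Under the standing assumptions and with the sets of the context: (1) the sets $a,b\subset X\times X$ belong to the $\sigma$-algebra $\mathcal A(X\times X)$ generated by analytic sets, and for every analytic $A\subset X$ the sets $a(A),b(A)$ belong to $\mathcal A(X)$; (2) $a\cap b\cap(\mathcal T_e\times X)=\emptyset$; (3) for $x\in\mathcal T$, each of $a(x)$, $b(x)$ is either empty or a singleton; (4) $a(\mathcal T)=a(\mathcal T_e)$ and $b(\mathcal T)=b(\mathcal T_e)$; (5) $\mathcal T_e=\mathcal T\cup a(\mathcal T)\cup b(\mathcal T)$ and $\mathcal T\cap(a(\mathcal T)\cup b(\mathcal T))=\emptyset$.
   Context: Standing assumptions: $(X,d)$ Polish; $d_L:X\times X\to[0,+\infty]$ a Borel ($d\times d$) distance, possibly $+\infty$-valued; $(X,d_L)$ geodesic (points at finite distance are joined by a curve of $d_L$-length equal to their distance) and non-branching (for $r\ge0$, $d_L(x,y)=r/2$ implies $\{z:d_L(x,z)=r\}\cap\{z:d_L(y,z)=r/2\}$ has at most one point); geodesics are $d$-continuous and locally compact in $(X,d)$ (for each geodesic $\gamma$ and point $x$ on it, $\gamma^{-1}(\bar B_r(x))$ is compact for some $r>0$). Transport setting: $\mu,\nu$ Borel probabilities, $\pi$ a coupling with finite $d_L$-cost concentrated on a $\sigma$-compact $d_L$-cyclically monotone $\Gamma\subset\{d_L<\infty\}$. $\Gamma'$: pairs $(x,y)$ such that there exist $I\ge0$, $(w_i,z_i)\in\Gamma$, $w_0=x$, $z_I=y$, $w_{I+1}:=w_0$, $\sum_{i=0}^I(d_L(w_{i+1},z_i)-d_L(w_i,z_i))=0$.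 $G:=\{(x,y):\exists(w,z)\in\Gamma',\ d_L(w,x)+d_L(x,y)+d_L(y,z)=d_L(w,z)\}$, $G(x):=\{y:(x,y)\in G\}$, $G^{-1}:=\{(x,y):(y,x)\in G\}$, $G^{-1}(x):=\{y:(x,y)\in G^{-1}\}$. $\mathcal T:=P_1(G^{-1}\setminus\{x=y\})\cap P_1(G\setminus\{x=y\})$, $\mathcal T_e:=P_1(G^{-1}\setminus\{x=y\})\cup P_1(G\setminus\{x=y\})$. Endpoint graphs: $a:=\{(x,y)\in G^{-1}: G^{-1}(y)\setminus\{y\}=\emptyset\}$, $b:=\{(x,y)\in G: G(y)\setminus\{y\}=\emptyset\}$; for $x\in X$, $a(x):=\{y:(x,y)\in a\}$, and for $A\subset X$, $a(A):=\bigcup_{x\in A}a(x)$; similarly for $b$. *)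

(* Defs.v *)
From Stdlib Require Import Reals List.
From Stdlib Require Export Rtopology.
Open Scope R_scope.

Inductive ER : Type := Fin (r : R) | PInf.

Definition er_add (a b : ER) : ER :=
  match a, b with Fin x, Fin y => Fin (x + y) | _, _ => PInf end.

Definition er_le (a b : ER) : Prop :=
  match a, b with
  | _, PInf => True
  | PInf, Fin _ => False
  | Fin x, Fin y => x <= y
  end.

(* finite sums over indices 0 .. n-1 *)
Fixpoint rsum (f : nat -> R) (n : nat) : R :=
  match n with O => 0 | S k => rsum f k + f k end.
Fixpoint ersum (f : nat -> ER) (n : nat) : ER :=
  match n with O => Fin 0 | S k => er_add (ersum f k) (f k) end.

Definition is_metric {T : Type} (d : T -> T -> R) : Prop :=
  (forall x y, 0 <= d x y) /\ (forall x y, d x y = 0 <-> x = y) /\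
  (forall x y, d x y = d y x) /\ (forall x y z, d x z <= d x y + d y z).

Definition complete_metric {T : Type} (d : T -> T -> R) : Prop :=
  forall u : nat -> T,
    (forall eps, eps > 0 -> exists N, forall m n, (N <= m)%nat -> (N <= n)%nat -> d (u m) (u n) < eps) ->
    exists l, forall eps, eps > 0 -> exists N, forall n, (N <= n)%nat -> d (u n) l < eps.

Definition countable_set {T : Type} (D : T -> Prop) : Prop :=
  exists f : nat -> option T, (forall n x, f n = Some x -> D x) /\
                              (forall x, D x -> exists n, f n = Some x).

Definition separable_metric {T : Type} (d : T -> T -> R) : Prop :=
  exists D : T -> Prop, countable_set D /\
    forall x eps, eps > 0 -> exists y, D y /\ d x y < eps.

Definition polish {T : Type} (d : T -> T -> R) : Prop :=
  is_metric d /\ complete_metric d /\ separable_metric d.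

(* product metric on T * T (induces the product topology) *)
Definition pdist {T : Type} (d : T -> T -> R) (p q : T * T) : R :=
  Rmax (d (fst p) (fst q)) (d (snd p) (snd q)).

Definition open_d {T : Type} (d : T -> T -> R) (U : T -> Prop) : Prop :=
  forall x, U x -> exists eps, eps > 0 /\ forall y, d x y < eps -> U y.

Definition compact_d {T : Type} (d : T -> T -> R) (K : T -> Prop) : Prop :=
  forall (I : Type) (U : I -> T -> Prop),
    (forall i, open_d d (U i)) -> (forall x, K x -> exists i, U i x) ->
    exists l : list I, forall x, K x -> exists i, In i l /\ U i x.

Definition sigma_compact {T : Type} (d : T -> T -> R) (S : T -> Prop) : Prop :=
  exists K : nat -> T -> Prop, (forall n, compact_d d (K n)) /\
    forall x, S x <-> exists n, K n x.

Inductive sigma_gen {T : Type} (F : (T -> Prop) -> Prop) : (T -> Prop) -> Prop :=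
| sg_base : forall A, F A -> sigma_gen F A
| sg_full : sigma_gen F (fun _ => True)
| sg_compl : forall A, sigma_gen F A -> sigma_gen F (fun x => ~ A x)
| sg_union : forall A : nat -> T -> Prop, (forall n, sigma_gen F (A n)) ->
    sigma_gen F (fun x => exists n, A n x)
| sg_ext : forall A B, sigma_gen F A -> (forall x, A x <-> B x) -> sigma_gen F B.

Definition borel {T : Type} (d : T -> T -> R) : (T -> Prop) -> Prop :=
  sigma_gen (open_d d).

Definition baire_continuous {T : Type} (d : T -> T -> R) (f : (nat -> nat) -> T) : Prop :=
  forall s eps, eps > 0 -> exists n, forall t,
    (forall i, (i < n)%nat -> t i = s i) -> d (f s) (f t) < eps.

Definition analytic {T : Type} (d : T -> T -> R) (A : T -> Prop) : Prop :=
  (forall x, ~ A x) \/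
  exists f : (nat -> nat) -> T, baire_continuous d f /\
    forall x, A x <-> exists s, f s = x.

Definition sigma_analytic {T : Type} (d : T -> T -> R) : (T -> Prop) -> Prop :=
  sigma_gen (analytic d).

Definition is_ext_distance {X : Type} (dL : X -> X -> ER) : Prop :=
  (forall x y r, dL x y = Fin r -> 0 <= r) /\
  (forall x y, dL x y = Fin 0 <-> x = y) /\
  (forall x y, dL x y = dL y x) /\
  (forall x y z, er_le (dL x z) (er_add (dL x y) (dL y z))).

Definition borel_ext_fun {X : Type} (d : X -> X -> R) (dL : X -> X -> ER) : Prop :=
  forall r : R, borel (pdist d) (fun p => er_le (dL (fst p) (snd p)) (Fin r)).

Definition is_geodesic {X : Type} (dL : X -> X -> ER) (g : R -> X) : Prop :=
  exists D : R, dL (g 0) (g 1) = Fin D /\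
    forall s t, 0 <= s <= 1 -> 0 <= t <= 1 -> dL (g s) (g t) = Fin (Rabs (t - s) * D).

Definition geodesic_space {X : Type} (dL : X -> X -> ER) : Prop :=
  forall x y r, dL x y = Fin r ->
    exists g, is_geodesic dL g /\ g 0 = x /\ g 1 = y.

Definition non_branching {X : Type} (dL : X -> X -> ER) : Prop :=
  forall x y r, 0 <= r -> dL x y = Fin (r / 2) ->
    forall z1 z2, dL x z1 = Fin r -> dL y z1 = Fin (r / 2) ->
                  dL x z2 = Fin r -> dL y z2 = Fin (r / 2) -> z1 = z2.

Definition geodesics_d_continuous {X : Type} (d : X -> X -> R) (dL : X -> X -> ER) : Prop :=
  forall g, is_geodesic dL g -> forall t, 0 <= t <= 1 ->
    forall eps, eps > 0 -> exists delta, delta > 0 /\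
      forall s, 0 <= s <= 1 -> Rabs (s - t) < delta -> d (g s) (g t) < eps.

Definition geodesics_locally_compact {X : Type} (d : X -> X -> R) (dL : X -> X -> ER) : Prop :=
  forall g, is_geodesic dL g -> forall t, 0 <= t <= 1 ->
    exists r, r > 0 /\ compact (fun s => 0 <= s <= 1 /\ d (g s) (g t) <= r).

Definition is_prob_measure {T : Type} (M : (T -> Prop) -> Prop) (m : (T -> Prop) -> R) : Prop :=
  (forall A, M A -> 0 <= m A) /\ m (fun _ => True) = 1 /\
  forall A : nat -> T -> Prop, (forall n, M (A n)) ->
    (forall i j x, i <> j -> A i x -> A j x -> False) ->
    Un_cv (fun n => rsum (fun k => m (A k)) (S n)) (m (fun x => exists n, A n x)).

Definition is_coupling {X : Type} (d : X -> X -> R) (mu nu : (X -> Prop) -> R)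
  (pi : (X * X -> Prop) -> R) : Prop :=
  forall A, borel d A ->
    pi (fun p => A (fst p)) = mu A /\ pi (fun p => A (snd p)) = nu A.

(* finite integral of d_L against pi: sup of integrals of nonnegative simple
   functions below d_L is finite *)
Definition finite_cost {X : Type} (d : X -> X -> R) (dL : X -> X -> ER)
  (pi : (X * X -> Prop) -> R) : Prop :=
  exists C : R, forall (n : nat) (A : nat -> X * X -> Prop) (c : nat -> R),
    (forall i, (i < n)%nat -> borel (pdist d) (A i)) ->
    (forall i j p, (i < n)%nat -> (j < n)%nat -> i <> j -> A i p -> A j p -> False) ->
    (forall i, (i < n)%nat -> 0 <= c i /\ forall p, A i p -> er_le (Fin (c i)) (dL (fst p) (snd p))) ->
    rsum (fun i => c i * pi (A i)) n <= C.

Definition concentrated_on {X : Type} (d : X -> X -> R) (pi : (X * X -> Prop) -> R)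
  (S : X * X -> Prop) : Prop :=
  exists B, borel (pdist d) B /\ (forall p, B p -> S p) /\ pi B = 1.

Definition cyclically_monotone {X : Type} (dL : X -> X -> ER) (Gam : X * X -> Prop) : Prop :=
  forall (n : nat) (x y : nat -> X),
    (forall i, (i <= n)%nat -> Gam (x i, y i)) ->
    let x' := fun i => if Nat.eqb i (S n) then x O else x i in
    er_le (ersum (fun i => dL (x i) (y i)) (S n))
          (ersum (fun i => dL (x' (S i)) (y i)) (S n)).

Definition er_val (a : ER) : R := match a with Fin r => r | PInf => 0 end.

(* Gamma': the sum has the finite terms d_L(w_i,z_i) (pairs in Gamma) and the
   terms d_L(w_{i+1},z_i); it equals 0 iff the latter are all finite and the
   real sum vanishes. *)
Definition Gprime {X : Type} (dL : X -> X -> ER) (Gam : X * X -> Prop) (x y : X) : Prop :=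
  exists (I : nat) (w z : nat -> X),
    (forall i, (i <= I)%nat -> Gam (w i, z i)) /\ w O = x /\ z I = y /\
    let w' := fun i => if Nat.eqb i (S I) then w O else w i in
    (forall i, (i <= I)%nat -> dL (w' (S i)) (z i) <> PInf) /\
    rsum (fun i => er_val (dL (w' (S i)) (z i)) - er_val (dL (w i) (z i))) (S I) = 0.

Definition Grel {X : Type} (dL : X -> X -> ER) (Gam : X * X -> Prop) (x y : X) : Prop :=
  exists w z, Gprime dL Gam w z /\
    er_add (er_add (dL w x) (dL x y)) (dL y z) = dL w z.

(* T = P1(G^{-1} \ diag) ∩ P1(G \ diag),  T_e = the union *)
Definition Tset {X : Type} (dL : X -> X -> ER) (Gam : X * X -> Prop) (x : X) : Prop :=
  (exists y, Grel dL Gam y x /\ x <> y) /\ (exists y, Grel dL Gam x y /\ x <> y).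
Definition Teset {X : Type} (dL : X -> X -> ER) (Gam : X * X -> Prop) (x : X) : Prop :=
  (exists y, Grel dL Gam y x /\ x <> y) \/ (exists y, Grel dL Gam x y /\ x <> y).

(* a = {(x,y) in G^{-1} : G^{-1}(y) \ {y} = empty},  b = {(x,y) in G : G(y) \ {y} = empty} *)
Definition aset {X : Type} (dL : X -> X -> ER) (Gam : X * X -> Prop) (x y : X) : Prop :=
  Grel dL Gam y x /\ forall z, Grel dL Gam z y -> z = y.
Definition bset {X : Type} (dL : X -> X -> ER) (Gam : X * X -> Prop) (x y : X) : Prop :=
  Grel dL Gam x y /\ forall z, Grel dL Gam y z -> z = y.

Definition rimg {X : Type} (r : X -> X -> Prop) (A : X -> Prop) (y : X) : Prop :=
  exists x, A x /\ r x y.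

(* Main.v *)
Require Import Defs.
From Stdlib Require Import Reals List Lra Lia Classical ClassicalEpsilon FunctionalExtensionality Cantor ZArith.
Open Scope R_scope.

Definition BB := nat -> nat.
Definition agree (n : nat) (s t : BB) : Prop := forall i, (i < n)%nat -> s i = t i.
Definition pcont (f : BB -> BB) : Prop :=
  forall s k, exists n, forall t, agree n s t -> agree k (f s) (f t).
Definition goodN (S : BB -> Prop) : Prop :=
  (forall s, ~ S s) \/ exists f, pcont f /\ forall s, S s <-> exists t, f t = s.
Definition closedN (S : BB -> Prop) : Prop :=
  forall s, ~ S s -> exists n, forall t, agree n s t -> ~ S t.

Lemma agree_sym n s t : agree n s t -> agree n t s.
Proof. intros H i Hi; symmetry; auto. Qed.
Lemma agree_trans n s t u : agree n s t -> agree n t u -> agree n s u.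
Proof. intros H1 H2 i Hi; rewrite H1; auto. Qed.
Lemma agree_le n m s t : (m <= n)%nat -> agree n s t -> agree m s t.
Proof. intros Hm H i Hi; apply H; lia. Qed.
Lemma agree_refl n s : agree n s s.
Proof. intros i _; reflexivity. Qed.

Lemma pcont_id : pcont (fun s => s).
Proof. intros s k; exists k; auto. Qed.
Lemma pcont_comp f g : pcont f -> pcont g -> pcont (fun s => f (g s)).
Proof.
  intros Hf Hg s k. destruct (Hf (g s) k) as [n Hn]. destruct (Hg s n) as [m Hm].
  exists m; intros t Ht; apply Hn, Hm, Ht.
Qed.

Lemma goodN_ext S T : goodN S -> (forall s, S s <-> T s) -> goodN T.
Proof.
  intros [H|[f [Hf H]]] E; [left; intros s Hs; apply (H s), E, Hs|].
  right; exists f; split; auto; intros s; rewrite <- E; auto.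
Qed.

Lemma baire_comp {T} (d : T -> T -> R) f g :
  baire_continuous d f -> pcont g -> baire_continuous d (fun s => f (g s)).
Proof.
  intros Hf Hg s eps He. destruct (Hf (g s) eps He) as [n Hn].
  destruct (Hg s n) as [m Hm]. exists m; intros t Ht; apply Hn.
  intros i Hi; symmetry; apply (Hm t); auto. intros j Hj; symmetry; auto.
Qed.

Lemma img_analytic {T} (d : T -> T -> R) (S : BB -> Prop) f :
  goodN S -> baire_continuous d f -> analytic d (fun x => exists s, S s /\ f s = x).
Proof.
  intros [H|[g [Hg HS]]] Hf.
  - left; intros x [s [Hs _]]; apply (H s Hs).
  - right; exists (fun s => f (g s)); split; [apply baire_comp; auto|].
    intros x; split.
    + intros [s [Hs <-]]. apply HS in Hs as [t <-]. eauto.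
    + intros [t <-]. exists (g t); split; auto. apply HS; eauto.
Qed.

Section Retr.
Variable Sc : BB -> Prop.
Variable s0 : BB.
Hypothesis Hs0 : Sc s0.
Hypothesis Hcl : closedN Sc.

Definition ext (n : nat) (p : BB) : Prop := exists u, Sc u /\ agree n p u.
Definition upd (p : BB) (n v : nat) : BB := fun i => if Nat.eqb i n then v else p i.

Definition nxt (s : BB) (n : nat) (p : BB) : BB :=
  if excluded_middle_informative (ext (S n) (upd p n (s n))) then upd p n (s n)
  else epsilon (inhabits s0) (fun u => Sc u /\ agree n p u).

Fixpoint pre (s : BB) (n : nat) : BB :=
  match n with O => (fun _ => O) | S m => nxt s m (pre s m) end.

Lemma pre_ext s n : ext n (pre s n).
Proof.
  induction n as [|n IH]; simpl.
  - exists s0; split; auto; intros i Hi; lia.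
  - unfold nxt. destruct (excluded_middle_informative _) as [H|H]; auto.
    pose proof (epsilon_spec (inhabits s0) (fun u => Sc u /\ agree n (pre s n) u) IH) as [H1 H2].
    exists (epsilon (inhabits s0) (fun u => Sc u /\ agree n (pre s n) u)); split; auto.
    apply agree_refl.
Qed.

Lemma pre_step s n : agree n (pre s n) (pre s (S n)).
Proof.
  simpl; unfold nxt. destruct (excluded_middle_informative _) as [H|H].
  - intros i Hi; unfold upd. destruct (Nat.eqb_spec i n); [lia|auto].
  - pose proof (epsilon_spec (inhabits s0) (fun u => Sc u /\ agree n (pre s n) u) (pre_ext s n)) as [H1 H2]; auto.
Qed.

Lemma pre_stable s n k : agree n (pre s n) (pre s (n + k)).
Proof.
  induction k as [|k IH]; [rewrite Nat.add_0_r; apply agree_refl|].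
  rewrite Nat.add_succ_r. eapply agree_trans; [apply IH|].
  eapply agree_le; [|apply pre_step]; lia.
Qed.

Definition retr (s : BB) : BB := fun i => pre s (S i) i.

Lemma retr_pre s n : agree n (retr s) (pre s n).
Proof.
  intros i Hi; unfold retr.
  pose proof (pre_stable s (S i) (n - S i)) as H.
  replace (S i + (n - S i))%nat with n in H by lia. apply H; lia.
Qed.

Lemma retr_in s : Sc (retr s).
Proof.
  apply NNPP; intros Hn. destruct (Hcl _ Hn) as [n Hn'].
  destruct (pre_ext s n) as [u [Hu Ha]]. apply (Hn' u); auto.
  eapply agree_trans; [apply retr_pre|exact Ha].
Qed.

Lemma pre_dep s t n : agree n s t -> pre s n = pre t n.
Proof.
  induction n as [|n IH]; intros H; simpl; auto.
  rewrite IH by (eapply agree_le; [|apply H]; lia).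
  unfold nxt. rewrite (H n) by lia. reflexivity.
Qed.

Lemma retr_pcont : pcont retr.
Proof.
  intros s k; exists k; intros t H.
  intros i Hi. unfold retr. rewrite (pre_dep s t (S i)); auto.
  eapply agree_le; [|apply H]; lia.
Qed.

Lemma retr_fix s : Sc s -> retr s = s.
Proof.
  intros Hs. assert (A : forall n, agree n (pre s n) s).
  { induction n as [|n IH]; [intros i Hi; lia|]. simpl; unfold nxt.
    destruct (excluded_middle_informative _) as [H|H].
    - intros i Hi; unfold upd. destruct (Nat.eqb_spec i n); [subst; auto|apply IH; lia].
    - exfalso; apply H; exists s; split; auto. intros i Hi; unfold upd.
      destruct (Nat.eqb_spec i n); [subst; auto|apply IH; lia]. }
  extensionality i. rewrite (retr_pre s (S i) i) by lia. apply A; lia.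
Qed.

Lemma closed_good_ne : goodN Sc.
Proof.
  right; exists retr; split; [apply retr_pcont|].
  intros s; split; [intros Hs; exists s; apply retr_fix; auto|].
  intros [t <-]; apply retr_in.
Qed.
End Retr.

Lemma closed_good S : closedN S -> goodN S.
Proof.
  intros Hc. destruct (classic (exists s, S s)) as [[s0 Hs0]|Hn].
  - eapply closed_good_ne; eauto.
  - left; intros s Hs; apply Hn; eauto.
Qed.

Definition piN (n : nat) (s : BB) : BB := fun k => s (to_nat (n, k)).
Definition joinN (t : nat -> BB) : BB := fun m => let (n, k) := of_nat m in t n k.
Lemma pi_join t n : piN n (joinN t) = t n.
Proof. extensionality k; unfold piN, joinN; rewrite cancel_of_to; auto. Qed.

Fixpoint bnd (n K : nat) : nat :=
  match K with O => O | S K' => Nat.max (bnd n K') (S (to_nat (n, K'))) end.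
Lemma bnd_spec n K k : (k < K)%nat -> (to_nat (n, k) < bnd n K)%nat.
Proof.
  induction K as [|K IH]; intros H; [lia|]. simpl.
  destruct (Nat.eq_dec k K); [subst; apply Nat.max_lt_iff; right; lia|]. apply Nat.max_lt_iff; left; apply IH; lia.
Qed.
Lemma pcont_pi n : pcont (piN n).
Proof.
  intros s k; exists (bnd n k); intros t H i Hi; unfold piN; apply H, bnd_spec, Hi.
Qed.
Definition shiftN (s : BB) : BB := fun i => s (S i).
Lemma pcont_shift : pcont shiftN.
Proof. intros s k; exists (S k); intros t H i Hi; unfold shiftN; apply H; lia. Qed.

Lemma goodN_img S f : goodN S -> pcont f -> goodN (fun x => exists s, S s /\ f s = x).
Proof.
  intros [H|[g [Hg HS]]] Hf.
  - left; intros x [s [Hs _]]; apply (H s Hs).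
  - right; exists (fun s => f (g s)); split; [apply pcont_comp; auto|].
    intros x; split.
    + intros [s [Hs <-]]. apply HS in Hs as [t <-]. eauto.
    + intros [t <-]. exists (g t); split; auto. apply HS; eauto.
Qed.

Definition goodspec (F : BB -> Prop) (f : BB -> BB) : Prop :=
  pcont f /\ forall s, F s <-> exists t, f t = s.
Definition Phi (F : nat -> BB -> Prop) (n : nat) : BB -> BB :=
  epsilon (inhabits (fun s : BB => s)) (goodspec (F n)).
Lemma Phi_spec F n : goodN (F n) -> (exists s, F n s) -> goodspec (F n) (Phi F n).
Proof.
  intros [H|H] [s Hs]; [exfalso; apply (H s Hs)|]. unfold Phi; apply epsilon_spec, H.
Qed.

Lemma goodN_union (F : nat -> BB -> Prop) :
  (forall n, goodN (F n)) -> goodN (fun s => exists n, F n s).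
Proof.
  intros HG. destruct (classic (exists n s, F n s)) as [[n0 [s0 Hs0]]|Hn].
  2:{ left; intros s [n Hs]; apply Hn; eauto. }
  set (idx := fun n => if excluded_middle_informative (exists s, F n s) then n else n0).
  assert (Hidx : forall n, exists s, F (idx n) s).
  { intros n; unfold idx; destruct (excluded_middle_informative _); eauto. }
  assert (Hidx2 : forall n, (exists s, F n s) -> idx n = n).
  { intros n H; unfold idx; destruct (excluded_middle_informative _); tauto. }
  right; exists (fun s => Phi F (idx (s O)) (shiftN s)); split.
  - intros s k. destruct (Phi_spec F (idx (s O)) (HG _) (Hidx _)) as [Hc _].
    destruct (Hc (shiftN s) k) as [n Hn]. exists (S n); intros t Ht.
    assert (E : t O = s O) by (symmetry; apply Ht; lia). rewrite E.
    apply Hn. intros i Hi; unfold shiftN; apply Ht; lia.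
  - intros s; split.
    + intros [n Hs]. assert (E := Hidx2 n ltac:(eauto)).
      destruct (Phi_spec F n (HG n) ltac:(eauto)) as [_ Hr].
      apply Hr in Hs as [t Ht].
      exists (fun i => match i with O => n | S j => t j end). simpl.
      rewrite E. exact Ht.
    + intros [t <-]. exists (idx (t O)).
      destruct (Phi_spec F (idx (t O)) (HG _) (Hidx _)) as [_ Hr]. apply Hr; eauto.
Qed.

Lemma goodN_inter (F : nat -> BB -> Prop) :
  (forall n, goodN (F n)) -> goodN (fun s => forall n, F n s).
Proof.
  intros HG. destruct (classic (exists s, forall n, F n s)) as [[x0 Hx0]|Hn].
  2:{ left; intros s Hs; apply Hn; eauto. }
  assert (Hsp : forall n, goodspec (F n) (Phi F n)) by (intros n; apply Phi_spec; eauto).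
  set (E := fun s => forall n, Phi F n (piN n s) = Phi F O (piN O s)).
  assert (Hc : closedN E).
  { intros s Hs. apply not_all_ex_not in Hs as [n Hn].
    assert (Hk : exists k, Phi F n (piN n s) k <> Phi F O (piN O s) k).
    { apply NNPP; intros Hk; apply Hn; extensionality k. apply NNPP; intros Hk'; apply Hk; eauto. }
    destruct Hk as [k Hk].
    destruct (pcont_comp _ _ (proj1 (Hsp n)) (pcont_pi n) s (S k)) as [N1 H1].
    destruct (pcont_comp _ _ (proj1 (Hsp O)) (pcont_pi O) s (S k)) as [N2 H2].
    exists (Nat.max N1 N2); intros t Ht HE. apply Hk.
    rewrite (H1 t (agree_le _ _ _ _ ltac:(apply Nat.le_max_l) Ht) k) by lia.
    rewrite (H2 t (agree_le _ _ _ _ ltac:(apply Nat.le_max_r) Ht) k) by lia. rewrite (HE n); auto. }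
  eapply goodN_ext.
  - apply (goodN_img E (fun s => Phi F O (piN O s))); [apply closed_good, Hc|].
    apply pcont_comp; [apply (Hsp O)|apply pcont_pi].
  - intros x; split.
    + intros [s [Hs <-]] n. rewrite <- (Hs n). apply (Hsp n). eauto.
    + intros Hx. assert (Ht : forall n, exists t, Phi F n t = x) by (intros n; apply (Hsp n), Hx).
      set (t := fun n => epsilon (inhabits (fun _ : nat => O)) (fun t => Phi F n t = x)).
      assert (Ht' : forall n, Phi F n (t n) = x) by (intros n; apply (epsilon_spec _ _ (Ht n))).
      exists (joinN t). unfold E; split; [intros n; rewrite !pi_join, !Ht'; auto|rewrite pi_join; auto].
Qed.

Definition sigN (P : BB -> Prop) : Prop := goodN P /\ goodN (fun s => ~ P s).

Lemma sigN_ext P Q : sigN P -> (forall s, P s <-> Q s) -> sigN Q.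
Proof.
  intros [H1 H2] E; split; [apply (goodN_ext _ _ H1); auto|apply (goodN_ext _ _ H2)].
  intros s; specialize (E s); tauto.
Qed.
Lemma sigN_compl P : sigN P -> sigN (fun s => ~ P s).
Proof.
  intros [H1 H2]; split; auto. eapply goodN_ext; [apply H1|]. intros s; split; [tauto|apply NNPP].
Qed.
Lemma sigN_union (P : nat -> BB -> Prop) : (forall n, sigN (P n)) -> sigN (fun s => exists n, P n s).
Proof.
  intros H; split; [apply goodN_union; intros n; apply H|].
  eapply goodN_ext; [apply (goodN_inter (fun n s => ~ P n s)); intros n; apply H|].
  intros s; split; [intros Hn [n Hs]; apply (Hn n Hs)|intros Hn n Hs; apply Hn; eauto].
Qed.
Lemma sigN_inter (P : nat -> BB -> Prop) : (forall n, sigN (P n)) -> sigN (fun s => forall n, P n s).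
Proof.
  intros H. eapply sigN_ext; [apply sigN_compl, (sigN_union (fun n s => ~ P n s)); intros n; apply sigN_compl, H|].
  intros s; split; [intros Hn n; apply NNPP; intros Hc; apply Hn; eauto|intros Hn [n Hs]; apply Hs, Hn].
Qed.
Lemma sigN_full : sigN (fun _ => True).
Proof.
  split; [right; exists (fun s => s); split; [apply pcont_id|]; intros s; split; eauto|].
  left; intros s Hs; apply Hs; auto.
Qed.
Lemma sigN_empty : sigN (fun _ => False).
Proof. eapply sigN_ext; [apply sigN_compl, sigN_full|]. tauto. Qed.
Lemma sigN_or P Q : sigN P -> sigN Q -> sigN (fun s => P s \/ Q s).
Proof.
  intros HP HQ. eapply sigN_ext; [apply (sigN_union (fun n => match n with O => P | _ => Q end))|].
  - intros [|n]; auto.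
  - intros s; split; [intros [[|n] H]; auto|intros [H|H]; [exists O|exists 1%nat]; auto].
Qed.
Lemma sigN_and P Q : sigN P -> sigN Q -> sigN (fun s => P s /\ Q s).
Proof.
  intros HP HQ. eapply sigN_ext; [apply (sigN_inter (fun n => match n with O => P | _ => Q end))|].
  - intros [|n]; auto.
  - intros s; split; [intros H; split; [apply (H O)|apply (H 1%nat)]|intros [H1 H2] [|n]; auto].
Qed.
Lemma sigN_clopen P : closedN P -> closedN (fun s => ~ P s) -> sigN P.
Proof. intros H1 H2; split; apply closed_good; auto. Qed.

Lemma sigma_pre {T} (F : (T -> Prop) -> Prop) (h : BB -> T) :
  (forall A, F A -> sigN (fun s => A (h s))) ->
  forall U, sigma_gen F U -> sigN (fun s => U (h s)).
Proof.
  intros HF U HU; induction HU.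
  - apply HF; auto.
  - apply sigN_full.
  - apply sigN_compl; auto.
  - apply (sigN_union (fun n s => A n (h s))); auto.
  - eapply sigN_ext; [apply IHHU|]. intros s; apply H.
Qed.

Lemma open_pre {T} (d : T -> T -> R) (h : BB -> T) U :
  baire_continuous d h -> open_d d U -> sigN (fun s => U (h s)).
Proof.
  intros Hh HU.
  set (O := fun n s => forall t, agree n s t -> U (h t)).
  eapply sigN_ext; [apply (sigN_union O)|].
  - intros n; apply sigN_clopen.
    + intros s Hs. exists n. intros t Ht Ho. apply Hs. intros u Hu. apply Ho.
      eapply agree_trans; [apply agree_sym, Ht|auto].
    + intros s Hs. apply NNPP in Hs. exists n. intros t Ht Ho. apply Ho. intros u Hu.
      apply Hs. eapply agree_trans; eauto.
  - intros s; split.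
    + intros [n Hn]. apply Hn, agree_refl.
    + intros Hs. destruct (HU _ Hs) as [eps [He Hb]]. destruct (Hh s eps He) as [n Hn].
      exists n; intros t Ht. apply Hb, Hn. intros i Hi; symmetry; apply Ht; auto.
Qed.

Lemma borel_pre {T} (d : T -> T -> R) (h : BB -> T) U :
  baire_continuous d h -> borel d U -> sigN (fun s => U (h s)).
Proof. intros Hh HU; apply (sigma_pre (open_d d)); auto. intros A HA; apply (open_pre d); auto. Qed.

Lemma analytic_inter_borel {T} (d : T -> T -> R) A U :
  analytic d A -> borel d U -> analytic d (fun x => A x /\ U x).
Proof.
  intros [HA|[f [Hf HA]]] HU; [left; intros x [H _]; apply (HA x H)|].
  destruct (borel_pre d f U Hf HU) as [Hg _].
  destruct (img_analytic d _ f Hg Hf) as [H|H]; [left|right].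
  - intros x [Hx Hu]. apply HA in Hx as [s <-]. apply (H (f s)); eauto.
  - destruct H as [g [Hg' H]]; exists g; split; auto. intros x; rewrite <- H. split.
    + intros [Hx Hu]; apply HA in Hx as [s <-]; eauto.
    + intros [s [Hs <-]]; split; auto; apply HA; eauto.
Qed.

Definition mcont {T U} (d : T -> T -> R) (d' : U -> U -> R) (f : T -> U) : Prop :=
  forall x eps, eps > 0 -> exists delta, delta > 0 /\ forall y, d x y < delta -> d' (f x) (f y) < eps.

Lemma baire_mcont {T U} (d : T -> T -> R) (d' : U -> U -> R) f g :
  baire_continuous d f -> mcont d d' g -> baire_continuous d' (fun s => g (f s)).
Proof.
  intros Hf Hg s eps He. destruct (Hg (f s) eps He) as [dl [Hd H]].
  destruct (Hf s dl Hd) as [n Hn]. exists n; intros t Ht; apply H, Hn, Ht.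
Qed.

Lemma analytic_img {T U} (d : T -> T -> R) (d' : U -> U -> R) A g :
  analytic d A -> mcont d d' g -> analytic d' (fun y => exists x, A x /\ g x = y).
Proof.
  intros [H|[f [Hf HA]]] Hg; [left; intros y [x [Hx _]]; apply (H x Hx)|].
  right; exists (fun s => g (f s)); split; [apply (baire_mcont d); auto|].
  intros y; split.
  - intros [x [Hx <-]]. apply HA in Hx as [s <-]; eauto.
  - intros [s <-]. exists (f s); split; auto. apply HA; eauto.
Qed.

Lemma analytic_ext {T} (d : T -> T -> R) A B :
  analytic d A -> (forall x, A x <-> B x) -> analytic d B.
Proof.
  intros [H|[f [Hf H]]] E; [left; intros x Hx; apply (H x), E, Hx|].
  right; exists f; split; auto; intros x; rewrite <- E; auto.
Qed.

Definition aspec {T} (d : T -> T -> R) (A : T -> Prop) (f : BB -> T) : Prop :=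
  baire_continuous d f /\ forall x, A x <-> exists s, f s = x.

Lemma analytic_union {T} (d : T -> T -> R) (A : nat -> T -> Prop) :
  (forall n, analytic d (A n)) -> analytic d (fun x => exists n, A n x).
Proof.
  intros HA. destruct (classic (exists n x, A n x)) as [[n0 [x0 Hx0]]|Hn].
  2:{ left; intros x [n Hx]; apply Hn; eauto. }
  set (Ph := fun n => epsilon (inhabits (fun _ : BB => x0)) (aspec d (A n))).
  assert (Hsp : forall n, (exists x, A n x) -> aspec d (A n) (Ph n)).
  { intros n [x Hx]; unfold Ph; apply epsilon_spec. destruct (HA n) as [H|H]; [exfalso; apply (H x Hx)|exact H]. }
  set (idx := fun n => if excluded_middle_informative (exists x, A n x) then n else n0).
  assert (Hidx : forall n, exists x, A (idx n) x).
  { intros n; unfold idx; destruct (excluded_middle_informative _); eauto. }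
  assert (Hidx2 : forall n, (exists x, A n x) -> idx n = n).
  { intros n H; unfold idx; destruct (excluded_middle_informative _); tauto. }
  right; exists (fun s => Ph (idx (s O)) (shiftN s)); split.
  - intros s eps He. destruct (Hsp _ (Hidx (s O))) as [Hc _].
    destruct (Hc (shiftN s) eps He) as [n Hn]. exists (S n); intros t Ht.
    assert (E : t O = s O) by (apply Ht; lia). rewrite E.
    apply Hn. intros i Hi; unfold shiftN; apply Ht; lia.
  - intros x; split.
    + intros [n Hx]. assert (E := Hidx2 n ltac:(eauto)).
      destruct (Hsp n ltac:(eauto)) as [_ Hr].
      apply Hr in Hx as [t Ht].
      exists (fun i => match i with O => n | S j => t j end). simpl.
      rewrite E. exact Ht.
    + intros [t <-]. exists (idx (t O)).
      destruct (Hsp _ (Hidx (t O))) as [_ Hr]. apply Hr; eauto.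
Qed.

Lemma metric_pos {T} (d : T -> T -> R) x y : is_metric d -> x <> y -> 0 < d x y.
Proof.
  intros [H0 [H1 _]] Hn. destruct (H0 x y) as [H|H]; auto. exfalso; apply Hn, H1; auto.
Qed.

Definition join2 (s t : BB) : BB := joinN (fun n => match n with O => s | _ => t end).
Lemma pi0_join2 s t : piN 0 (join2 s t) = s.
Proof. unfold join2; rewrite pi_join; auto. Qed.
Lemma pi1_join2 s t : piN 1 (join2 s t) = t.
Proof. unfold join2; rewrite pi_join; auto. Qed.

Lemma eq_closed {T} (d : T -> T -> R) f g :
  is_metric d -> baire_continuous d f -> baire_continuous d g -> closedN (fun s => f s = g s).
Proof.
  intros Hm Hf Hg s Hs. pose proof (metric_pos d _ _ Hm Hs) as Hp.
  destruct (Hf s (d (f s) (g s) / 2) ltac:(lra)) as [n1 H1].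
  destruct (Hg s (d (f s) (g s) / 2) ltac:(lra)) as [n2 H2].
  exists (Nat.max n1 n2). intros t Ht Heq.
  assert (A1 := H1 t (fun i Hi => eq_sym (Ht i ltac:(lia)))).
  assert (A2 := H2 t (fun i Hi => eq_sym (Ht i ltac:(lia)))).
  destruct Hm as [_ [_ [Hs' Ht']]]. rewrite Heq in A1.
  specialize (Ht' (f s) (g t) (g s)). rewrite (Hs' (g t) (g s)) in Ht'. lra.
Qed.

Lemma analytic_and {T} (d : T -> T -> R) A C :
  is_metric d -> analytic d A -> analytic d C -> analytic d (fun x => A x /\ C x).
Proof.
  intros Hm [H|[f [Hf HA]]]; [left; intros x [Hx _]; apply (H x Hx)|].
  intros [H|[g [Hg HC]]]; [left; intros x [_ Hx]; apply (H x Hx)|].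
  assert (Hf0 : baire_continuous d (fun s => f (piN 0 s))) by (apply baire_comp; auto; apply pcont_pi).
  assert (Hg1 : baire_continuous d (fun s => g (piN 1 s))) by (apply baire_comp; auto; apply pcont_pi).
  eapply analytic_ext; [apply (img_analytic d _ _ (closed_good _ (eq_closed d _ _ Hm Hf0 Hg1)) Hf0)|].
  intros x; split.
  - intros [s [Hs <-]]; split; [apply HA; eauto|rewrite Hs; apply HC; eauto].
  - intros [Ha Hc]. apply HA in Ha as [s Hs]. apply HC in Hc as [t Ht].
    exists (join2 s t); rewrite pi0_join2, pi1_join2; split; congruence.
Qed.

Lemma pdist_fst {T} (d : T -> T -> R) p q : d (fst p) (fst q) <= pdist d p q.
Proof. unfold pdist; apply Rmax_l. Qed.
Lemma pdist_snd {T} (d : T -> T -> R) p q : d (snd p) (snd q) <= pdist d p q.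
Proof. unfold pdist; apply Rmax_r. Qed.

Lemma analytic_prod {T} (d : T -> T -> R) A C :
  analytic d A -> analytic d C -> analytic (pdist d) (fun p => A (fst p) /\ C (snd p)).
Proof.
  intros [H|[f [Hf HA]]]; [left; intros x [Hx _]; apply (H _ Hx)|].
  intros [H|[g [Hg HC]]]; [left; intros x [_ Hx]; apply (H _ Hx)|].
  right; exists (fun s => (f (piN 0 s), g (piN 1 s))); split.
  - intros s eps He.
    destruct (baire_comp d f _ Hf (pcont_pi 0) s eps He) as [n1 H1].
    destruct (baire_comp d g _ Hg (pcont_pi 1) s eps He) as [n2 H2].
    exists (Nat.max n1 n2); intros t Ht. unfold pdist; simpl.
    apply Rmax_lub_lt; [apply H1|apply H2]; intros i Hi; apply Ht; lia.
  - intros [x y]; simpl; split.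
    + intros [Ha Hc]. apply HA in Ha as [s Hs]. apply HC in Hc as [t Ht].
      exists (join2 s t); rewrite pi0_join2, pi1_join2; congruence.
    + intros [s E]; inversion E; split; [apply HA|apply HC]; eauto.
Qed.

Lemma h2pos n : 0 < (/2)^n.
Proof. apply pow_lt; lra. Qed.
Lemma h2S n : (/2)^(S n) = (/2)^n / 2.
Proof. simpl; field. Qed.
Lemma h2small eps : eps > 0 -> exists N, forall n, (N <= n)%nat -> (/2)^n < eps.
Proof.
  intros He. destruct (pow_lt_1_zero (/2) ltac:(rewrite Rabs_right; lra) eps He) as [N HN].
  exists N; intros n Hn. specialize (HN n Hn). rewrite Rabs_right in HN; auto.
  left; apply h2pos.
Qed.
Lemma le_eps a b : (forall eps, eps > 0 -> a <= b + eps) -> a <= b.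
Proof. intros H. apply Rnot_lt_le; intros Hl. specialize (H ((a - b)/2) ltac:(lra)). lra. Qed.

Section Lusin.
Variable X : Type.
Variable d : X -> X -> R.
Hypothesis Hp : polish d.
Variable x0 : X.

Let Hm : is_metric d := proj1 Hp.
Lemma dsym x y : d x y = d y x.
Proof. apply (proj1 (proj2 (proj2 Hm))). Qed.
Lemma dtri x y z : d x z <= d x y + d y z.
Proof. apply (proj2 (proj2 (proj2 Hm))). Qed.
Lemma dpos x y : 0 <= d x y.
Proof. apply (proj1 Hm). Qed.
Lemma deq x y : d x y = 0 -> x = y.
Proof. apply (proj1 (proj2 Hm)). Qed.
Lemma dself x : d x x = 0.
Proof. apply (proj1 (proj2 Hm)); auto. Qed.

Lemma dense_seq : exists pt : nat -> X, forall x eps, eps > 0 -> exists n, d x (pt n) < eps.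
Proof.
  pose proof Hp as HH; destruct HH as [_ [_ [D [[f [Hf1 Hf2]] Hd]]]].
  exists (fun n => match f n with Some y => y | None => x0 end).
  intros x eps He. destruct (Hd x eps He) as [y [Hy Hxy]]. destruct (Hf2 y Hy) as [n Hn].
  exists n; rewrite Hn; auto.
Qed.

Variable pt : nat -> X.
Hypothesis Hpt : forall x eps, eps > 0 -> exists n, d x (pt n) < eps.

Definition Vs (s : BB) : Prop := forall n, d (pt (s n)) (pt (s (S n))) < (/2)^n.

Lemma Vs_closed : closedN Vs.
Proof.
  intros s Hs. apply not_all_ex_not in Hs as [n Hn]. exists (S (S n)). intros t Ht Hv.
  apply Hn. rewrite (Ht n), (Ht (S n)) by lia. apply Hv.
Qed.
Lemma Vs_0 : Vs (fun _ => O).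
Proof. intros n; rewrite dself; apply h2pos. Qed.

Lemma Vs_geo s : Vs s -> forall n j, d (pt (s n)) (pt (s (n + j)%nat)) <= 2 * (/2)^n - 2 * (/2)^(n+j).
Proof.
  intros Hv n j; induction j as [|j IH].
  - rewrite Nat.add_0_r, dself; lra.
  - rewrite Nat.add_succ_r. eapply Rle_trans; [apply (dtri _ (pt (s (n+j)%nat)))|].
    specialize (Hv (n + j)%nat). rewrite h2S. lra.
Qed.

Definition conv (u : nat -> X) (l : X) : Prop :=
  forall eps, eps > 0 -> exists N, forall n, (N <= n)%nat -> d (u n) l < eps.
Definition Lim (s : BB) : X := epsilon (inhabits x0) (conv (fun n => pt (s n))).

Lemma Lim_spec s : Vs s -> conv (fun n => pt (s n)) (Lim s).
Proof.
  intros Hv. unfold Lim; apply epsilon_spec. pose proof Hp as HH; destruct HH as [_ [Hc _]]. apply Hc.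
  intros eps He. destruct (h2small (eps/2) ltac:(lra)) as [N HN]. exists N; intros m n Hm' Hn.
  destruct (Nat.le_ge_cases m n) as [Hl|Hl].
  - pose proof (Vs_geo s Hv m (n - m)) as G. assert (E : (m + (n - m))%nat = n) by lia. rewrite E in G.
    specialize (HN m Hm'). pose proof (h2pos n). lra.
  - pose proof (Vs_geo s Hv n (m - n)) as G. assert (E : (n + (m - n))%nat = m) by lia. rewrite E in G.
    specialize (HN n Hn). pose proof (h2pos m). rewrite dsym. lra.
Qed.

Lemma Lim_close s : Vs s -> forall n, d (pt (s n)) (Lim s) <= 2 * (/2)^n.
Proof.
  intros Hv n. apply le_eps; intros eps He. destruct (Lim_spec s Hv eps He) as [N HN].
  specialize (HN (Nat.max N n) ltac:(lia)).
  pose proof (Vs_geo s Hv n (Nat.max N n - n)) as G. assert (E : (n + (Nat.max N n - n))%nat = Nat.max N n) by lia. rewrite E in G.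
  pose proof (dtri (pt (s n)) (pt (s (Nat.max N n))) (Lim s)). pose proof (h2pos (Nat.max N n)). lra.
Qed.

Definition Lmap (s : BB) : X := Lim (retr Vs (fun _ => O) s).

Lemma Lmap_cont : baire_continuous d Lmap.
Proof.
  intros s eps He. destruct (h2small (eps/4) ltac:(lra)) as [n Hn]. specialize (Hn n (le_n n)).
  destruct (retr_pcont Vs (fun _ => O) s (S n)) as [N HN]. exists N; intros t Ht.
  specialize (HN t (fun i Hi => eq_sym (Ht i Hi)) n ltac:(lia)). unfold Lmap.
  pose proof (Lim_close _ (retr_in Vs _ Vs_0 Vs_closed s) n) as C1.
  pose proof (Lim_close _ (retr_in Vs _ Vs_0 Vs_closed t) n) as C2.
  rewrite HN in C1. rewrite dsym in C1.
  pose proof (dtri (Lim (retr Vs (fun _ => O) s)) (pt (retr Vs (fun _ => O) t n)) (Lim (retr Vs (fun _ => O) t))). lra.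
Qed.

Lemma Lmap_surj x : exists s, Lmap s = x.
Proof.
  set (s := fun n => epsilon (inhabits O) (fun k => d x (pt k) < (/2)^(S (S n)))).
  assert (Hs : forall n, d x (pt (s n)) < (/2)^(S (S n))).
  { intros n; unfold s; apply epsilon_spec, Hpt, h2pos. }
  assert (Hv : Vs s).
  { intros n. pose proof (Hs n) as A. pose proof (Hs (S n)) as B. rewrite !h2S in A, B.
    rewrite h2S in B. pose proof (dtri (pt (s n)) x (pt (s (S n)))). rewrite (dsym _ x) in H.
    pose proof (h2pos n). lra. }
  exists s. unfold Lmap. rewrite (retr_fix Vs _ Vs_0 s Hv).
  symmetry; apply deq. apply Rle_antisym; [|apply dpos].
  apply le_eps; intros eps He. destruct (h2small (eps/3) ltac:(lra)) as [n Hn]. specialize (Hn n (le_n n)).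
  pose proof (Lim_close s Hv n). pose proof (Hs n) as A. rewrite !h2S in A.
  pose proof (dtri x (pt (s n)) (Lim s)). pose proof (h2pos n). lra.
Qed.
End Lusin.

Lemma polish_analytic {X} (d : X -> X -> R) : polish d -> analytic d (fun _ => True).
Proof.
  intros Hp. destruct (classic (exists x : X, True)) as [[x0 _]|Hn].
  2:{ left; intros x _; apply Hn; eauto. }
  destruct (dense_seq X d Hp x0) as [pt Hpt].
  right; exists (Lmap X d x0 pt); split; [apply Lmap_cont; auto|].
  intros x; split; auto. intros _; eapply Lmap_surj; eauto.
Qed.

Lemma pdist_metric {X} (d : X -> X -> R) : is_metric d -> is_metric (pdist d).
Proof.
  intros [H0 [H1 [H2 H3]]]; unfold pdist; repeat split.
  - intros p q; eapply Rle_trans; [apply (H0 (fst p) (fst q))|apply Rmax_l].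
  - intros E. pose proof (Rmax_l (d (fst x) (fst y)) (d (snd x) (snd y))).
    pose proof (Rmax_r (d (fst x) (fst y)) (d (snd x) (snd y))).
    pose proof (H0 (fst x) (fst y)). pose proof (H0 (snd x) (snd y)).
    destruct x as [a b], y as [c e]; simpl in *. f_equal; apply H1; lra.
  - intros E; subst. rewrite (proj2 (H1 _ _) eq_refl), (proj2 (H1 _ _) eq_refl). apply Rmax_left; lra.
  - intros x y; rewrite H2, (H2 (snd x)); auto.
  - intros x y z. apply Rmax_lub.
    + eapply Rle_trans; [apply H3|]. apply Rplus_le_compat; [apply Rmax_l|apply Rmax_l].
    + eapply Rle_trans; [apply H3|]. apply Rplus_le_compat; [apply Rmax_r|apply Rmax_r].
Qed.

Lemma h2mono n k : (/2)^(n + k) <= (/2)^n.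
Proof.
  induction k as [|k IH]; [rewrite Nat.add_0_r; lra|]. rewrite Nat.add_succ_r, h2S.
  pose proof (h2pos (n+k)). lra.
Qed.
Lemma h2le n m : (n <= m)%nat -> (/2)^m <= (/2)^n.
Proof. intros H. replace m with (n + (m - n))%nat by lia. apply h2mono. Qed.

Lemma list_max (l : list nat) : exists N, forall i, In i l -> (i <= N)%nat.
Proof.
  induction l as [|a l [N HN]]; [exists O; intros i []|].
  exists (Nat.max a N); intros i [E|Hi]; [subst; lia|specialize (HN i Hi); lia].
Qed.

Lemma compact_closed {T} (D : T -> T -> R) K :
  is_metric D -> compact_d D K -> open_d D (fun x => ~ K x).
Proof.
  intros Hm HK x Hx. destruct Hm as [H0 [H1 [H2 H3]]].
  destruct (HK nat (fun n y => (/2)^n < D y x)) as [l Hl].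
  - intros n y Hy. exists (D y x - (/2)^n); split; [lra|]. intros z Hz.
    specialize (H3 y z x). lra.
  - intros y Hy. assert (P : 0 < D y x).
    { destruct (H0 y x) as [h|h]; auto. exfalso; symmetry in h; apply H1 in h; subst; auto. }
    destruct (h2small _ P) as [n Hn]. exists n; apply Hn; lia.
  - destruct (list_max l) as [N HN]. exists ((/2)^N); split; [apply h2pos|].
    intros z Hz Kz. destruct (Hl z Kz) as [i [Hi Hiz]].
    pose proof (h2le i N (HN i Hi)). rewrite H2 in Hiz. lra.
Qed.

Lemma sigma_compact_borel {T} (D : T -> T -> R) S :
  is_metric D -> sigma_compact D S -> borel D S.
Proof.
  intros Hm [K [HK HS]]. eapply sg_ext; [apply (sg_union _ (fun n x => K n x))|].
  - intros n. eapply sg_ext; [apply sg_compl, sg_base, compact_closed; [apply Hm|apply HK]|].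
    intros x; split; [apply NNPP|tauto].
  - intros x; rewrite HS; tauto.
Qed.

Lemma mcont_fst {X} (d : X -> X -> R) : mcont (pdist d) d fst.
Proof. intros p eps He; exists eps; split; auto; intros q Hq. pose proof (pdist_fst d p q); lra. Qed.
Lemma mcont_snd {X} (d : X -> X -> R) : mcont (pdist d) d snd.
Proof. intros p eps He; exists eps; split; auto; intros q Hq. pose proof (pdist_snd d p q); lra. Qed.
Lemma mcont_swap {X} (d : X -> X -> R) : mcont (pdist d) (pdist d) (fun p => (snd p, fst p)).
Proof. intros p eps He; exists eps; split; auto; intros q Hq. unfold pdist in *; simpl. rewrite Rmax_comm; auto. Qed.

Lemma baire_pair {X} (d : X -> X -> R) f g :
  baire_continuous d f -> baire_continuous d g -> baire_continuous (pdist d) (fun s => (f s, g s)).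
Proof.
  intros Hf Hg s eps He. destruct (Hf s eps He) as [n1 H1]. destruct (Hg s eps He) as [n2 H2].
  exists (Nat.max n1 n2); intros t Ht. unfold pdist; simpl.
  apply Rmax_lub_lt; [apply H1|apply H2]; intros i Hi; apply Ht; lia.
Qed.

Lemma offdiag_open {X} (d : X -> X -> R) : is_metric d -> open_d (pdist d) (fun p => fst p <> snd p).
Proof.
  intros Hm p Hp. pose proof (metric_pos d _ _ Hm Hp) as P. exists (d (fst p) (snd p) / 2); split; [lra|].
  intros q Hq E. pose proof (pdist_fst d p q). pose proof (pdist_snd d p q).
  destruct Hm as [_ [_ [H2 H3]]]. specialize (H3 (fst p) (fst q) (snd p)). rewrite (H2 (fst q)) in H3. rewrite E in *. lra.
Qed.

Lemma XX_analytic {X} (d : X -> X -> R) : polish d -> analytic (pdist d) (fun _ => True).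
Proof.
  intros Hp. eapply analytic_ext; [apply (analytic_prod d _ _ (polish_analytic d Hp) (polish_analytic d Hp))|].
  tauto.
Qed.

Lemma borel_analytic_XX {X} (d : X -> X -> R) S : polish d -> borel (pdist d) S -> analytic (pdist d) S.
Proof.
  intros Hp HS. eapply analytic_ext; [apply (analytic_inter_borel _ _ _ (XX_analytic d Hp) HS)|]. tauto.
Qed.
Lemma borel_analytic_X {X} (d : X -> X -> R) S : polish d -> borel d S -> analytic d S.
Proof.
  intros Hp HS. eapply analytic_ext; [apply (analytic_inter_borel _ _ _ (polish_analytic d Hp) HS)|]. tauto.
Qed.

Lemma nat_floor r : 0 < r -> exists j : nat, r < INR j <= r + 1.
Proof.
  intros Hr. destruct (archimed r) as [H1 H2].
  assert (Hz : (0 < up r)%Z) by (apply lt_IZR; lra).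
  exists (Z.to_nat (up r)). rewrite INR_IZR_INZ, Z2Nat.id by lia. lra.
Qed.
Lemma nat_above r : exists n : nat, r < INR n.
Proof.
  destruct (Rlt_or_le 0 r) as [H|H].
  - destruct (nat_floor r H) as [j Hj]; exists j; lra.
  - exists 1%nat; simpl; lra.
Qed.

Definition qd (n j : nat) : R := INR j / INR (S n) - INR n.
Lemma qd_dense a b : a < b -> exists n j, a < qd n j < b.
Proof.
  intros Hab. destruct (nat_above (-a)) as [n1 H1]. destruct (nat_above (/(b - a))) as [n2 H2].
  set (n := Nat.max n1 n2).
  assert (Hn1 : INR n1 <= INR n) by (apply le_INR; lia).
  assert (Hn2 : INR n2 <= INR n) by (apply le_INR; lia).
  assert (HS : INR (S n) = INR n + 1) by (rewrite S_INR; auto).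
  pose proof (pos_INR n) as Hp.
  destruct (nat_floor ((a + INR n) * INR (S n))) as [j Hj].
  { apply Rmult_lt_0_compat; lra. }
  exists n, j. unfold qd. rewrite HS in *. split.
  - apply (Rmult_lt_reg_r (INR n + 1)); [lra|]. unfold Rminus. rewrite Rmult_plus_distr_r.
    unfold Rdiv; rewrite Rmult_assoc, Rinv_l by lra. lra.
  - assert (E : INR j / (INR n + 1) <= a + INR n + / (INR n + 1)).
    { apply (Rmult_le_reg_r (INR n + 1)); [lra|]. unfold Rdiv; rewrite Rmult_assoc, Rinv_l by lra.
      rewrite !Rmult_plus_distr_r, Rinv_l by lra. lra. }
    assert (F : / (INR n + 1) < b - a).
    { assert (0 < / (b - a)) by (apply Rinv_0_lt_compat; lra).
      rewrite <- (Rinv_inv (b - a)). apply Rinv_lt_contravar; [apply Rmult_lt_0_compat; lra|lra]. }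
    lra.
Qed.

Definition meas (f : BB -> R) : Prop := forall r, sigN (fun s => f s <= r).

Lemma meas_lt f r : meas f -> sigN (fun s => f s < r).
Proof.
  intros Hf. eapply sigN_ext; [apply (sigN_union (fun n s => f s <= r - (/2)^n))|].
  - intros n; apply Hf.
  - intros s; split; [intros [n Hn]; pose proof (h2pos n); lra|].
    intros H. destruct (h2small (r - f s) ltac:(lra)) as [n Hn]. exists n; specialize (Hn n (le_n n)); lra.
Qed.
Lemma meas_gt f r : meas f -> sigN (fun s => f s > r).
Proof. intros Hf. eapply sigN_ext; [apply sigN_compl, (Hf r)|]. intros s; lra. Qed.
Lemma meas_ge f r : meas f -> sigN (fun s => f s >= r).
Proof. intros Hf. eapply sigN_ext; [apply sigN_compl, (meas_lt f r Hf)|]. intros s; lra. Qed.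
Lemma meas_eq f r : meas f -> sigN (fun s => f s = r).
Proof. intros Hf. eapply sigN_ext; [apply sigN_and; [apply (Hf r)|apply (meas_ge f r Hf)]|]. intros s; lra. Qed.
Lemma meas_const c : meas (fun _ => c).
Proof.
  intros r. destruct (Rle_or_lt c r) as [H|H].
  - eapply sigN_ext; [apply sigN_full|]. intros s; lra.
  - eapply sigN_ext; [apply sigN_empty|]. intros s; lra.
Qed.
Lemma meas_opp f : meas f -> meas (fun s => - f s).
Proof. intros Hf r. eapply sigN_ext; [apply (meas_ge f (-r) Hf)|]. intros s; lra. Qed.
Lemma meas_plus f g : meas f -> meas g -> meas (fun s => f s + g s).
Proof.
  intros Hf Hg r. eapply sigN_ext; [apply sigN_compl|].
  - apply (sigN_union (fun n s => exists j, f s > qd n j /\ g s > r - qd n j)). intros n.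
    apply (sigN_union (fun j s => f s > qd n j /\ g s > r - qd n j)). intros j.
    apply sigN_and; [apply meas_gt; auto|apply meas_gt; auto].
  - intros s; split.
    + intros H. apply Rnot_lt_le; intros Hl; apply H.
      destruct (qd_dense (r - g s) (f s) ltac:(lra)) as [n [j Hq]]. exists n, j; lra.
    + intros H [n [j Hq]]. lra.
Qed.
Lemma meas_minus f g : meas f -> meas g -> meas (fun s => f s - g s).
Proof. intros Hf Hg; apply meas_plus; auto; apply meas_opp; auto. Qed.
Lemma meas_rsum (f : nat -> BB -> R) n : (forall i, meas (f i)) -> meas (fun s => rsum (fun i => f i s) n).
Proof.
  intros H; induction n as [|n IH]; simpl; [apply meas_const|]. apply meas_plus; auto.
Qed.
Lemma meas_ext f g : meas f -> (forall s, f s = g s) -> meas g.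
Proof. intros Hf E r. eapply sigN_ext; [apply (Hf r)|]. intros s; specialize (E s); lra. Qed.

Lemma rsum_ext f g n : (forall i, (i < n)%nat -> f i = g i) -> rsum f n = rsum g n.
Proof.
  induction n as [|n IH]; intros H; simpl; auto. rewrite IH, H; auto; intros; apply H; lia.
Qed.

Lemma sigN_imp (P : Prop) Q : sigN Q -> sigN (fun s => P -> Q s).
Proof.
  intros HQ. destruct (classic P) as [H|H].
  - eapply sigN_ext; [apply HQ|]. intros s; tauto.
  - eapply sigN_ext; [apply sigN_full|]. intros s; tauto.
Qed.

Section Meas.
Variable X : Type.
Variable d : X -> X -> R.
Variable dL : X -> X -> ER.
Hypothesis Hpol : polish d.
Hypothesis HdLb : borel_ext_fun d dL.

Lemma dl_le_sig h r : baire_continuous (pdist d) h ->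
  sigN (fun s => er_le (dL (fst (h s)) (snd (h s))) (Fin r)).
Proof.
  intros Hh. apply (borel_pre (pdist d) h (fun p => er_le (dL (fst p) (snd p)) (Fin r)) Hh (HdLb r)).
Qed.

Lemma dl_fin_sig h : baire_continuous (pdist d) h ->
  sigN (fun s => dL (fst (h s)) (snd (h s)) <> PInf).
Proof.
  intros Hh. eapply sigN_ext; [apply (sigN_union (fun n s => er_le (dL (fst (h s)) (snd (h s))) (Fin (INR n))))|].
  - intros n; apply dl_le_sig; auto.
  - intros s; cbv beta; destruct (dL (fst (h s)) (snd (h s))) as [x|]; simpl; split.
    + intros _; discriminate.
    + intros _. destruct (nat_above x) as [n Hn]; exists n; simpl; lra.
    + intros [n []].
    + intros H; congruence.
Qed.

Lemma dl_val_meas h : baire_continuous (pdist d) h ->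
  meas (fun s => er_val (dL (fst (h s)) (snd (h s)))).
Proof.
  intros Hh r. eapply sigN_ext; [apply sigN_or; [apply (dl_le_sig h r Hh)|apply sigN_and; [apply sigN_compl, (dl_fin_sig h Hh)|apply (meas_const 0 (-0 + r)) ]]|].
  intros s; cbv beta; destruct (dL (fst (h s)) (snd (h s))) as [x|]; simpl; split.
  - intros [H|[H _]]; auto. exfalso; apply H; discriminate.
  - intros H; left; auto.
  - intros [[]|[_ H]]; lra.
  - intros H; right; split; [congruence|lra].
Qed.
End Meas.

Lemma sel_eq {A} (w : nat -> A) i I :
  (if Nat.eqb (S i) (S I) then w O else w (S i)) = w (if Nat.eqb (S i) (S I) then O else S i).
Proof. destruct (Nat.eqb (S i) (S I)); auto. Qed.
Lemma sel_le i I : (i <= I)%nat -> ((if Nat.eqb (S i) (S I) then O else S i) <= I)%nat.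
Proof. intros H. destruct (Nat.eqb_spec (S i) (S I)); lia. Qed.

Section GpAn.
Variable X : Type.
Variable d : X -> X -> R.
Variable dL : X -> X -> ER.
Variable Gam : X * X -> Prop.
Hypothesis Hpol : polish d.
Hypothesis HdLb : borel_ext_fun d dL.
Hypothesis HGsc : sigma_compact (pdist d) Gam.

Lemma Gam_an : analytic (pdist d) Gam.
Proof.
  apply borel_analytic_XX; auto. apply sigma_compact_borel; auto. apply pdist_metric, Hpol.
Qed.

Lemma Gp_an : analytic (pdist d) (fun p => Gprime dL Gam (fst p) (snd p)).
Proof.
  destruct Gam_an as [He|[g [Hg HGam]]].
  { left; intros [x y] [I [w [z [HG _]]]]. apply (He (w O, z O)), HG; lia. }
  set (W := fun s i => fst (g (piN i s))). set (Z := fun s i => snd (g (piN i s))).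
  assert (HW : forall i, baire_continuous d (fun s => W s i)).
  { intros i; apply (baire_mcont (pdist d) d (fun s => g (piN i s)) fst); [apply baire_comp; auto; apply pcont_pi|apply mcont_fst]. }
  assert (HZ : forall i, baire_continuous d (fun s => Z s i)).
  { intros i; apply (baire_mcont (pdist d) d (fun s => g (piN i s)) snd); [apply baire_comp; auto; apply pcont_pi|apply mcont_snd]. }
  assert (Hp : forall a b, baire_continuous (pdist d) (fun s => (W s a, Z s b))) by (intros; apply baire_pair; auto).
  set (SI := fun I s =>
    (forall i, (i <= I)%nat -> dL (W s (if Nat.eqb (S i) (S I) then O else S i)) (Z s i) <> PInf) /\
    rsum (fun i => er_val (dL (W s (if Nat.eqb (S i) (S I) then O else S i)) (Z s i)) - er_val (dL (W s i) (Z s i))) (S I) = 0).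
  assert (HSI : forall I, sigN (SI I)).
  { intros I. apply sigN_and.
    - apply (sigN_inter (fun i s => (i <= I)%nat -> _)). intros i. apply sigN_imp.
      eapply sigN_ext; [apply (dl_fin_sig X d dL HdLb _ (Hp (if Nat.eqb (S i) (S I) then O else S i) i))|]. intros s; simpl; tauto.
    - apply meas_eq. apply (meas_rsum (fun i s => er_val (dL (W s (if Nat.eqb (S i) (S I) then O else S i)) (Z s i)) - er_val (dL (W s i) (Z s i)))).
      intros i. apply meas_minus.
      + eapply meas_ext; [apply (dl_val_meas X d dL HdLb _ (Hp (if Nat.eqb (S i) (S I) then O else S i) i))|]. intros s; reflexivity.
      + eapply meas_ext; [apply (dl_val_meas X d dL HdLb _ (Hp i i))|]. intros s; reflexivity. }
  eapply analytic_ext; [apply (analytic_union _ (fun I p => exists s, SI I s /\ (W s O, Z s I) = p))|].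
  { intros I. apply img_analytic; [apply (HSI I)|apply Hp]. }
  intros [x y]; simpl; split.
  - intros [I [s [[H1 H2] E]]]. inversion E; subst x y.
    exists I, (fun i => W s i), (fun i => Z s i). split; [|split; [auto|split; [auto|]]].
    + intros i _. apply HGam. exists (piN i s). unfold W, Z; apply surjective_pairing.
    + cbv zeta. split.
      * intros i Hi. rewrite sel_eq. apply H1; auto.
      * rewrite <- H2. apply rsum_ext. intros i Hi. rewrite sel_eq. reflexivity.
  - intros [I [w [z [HG [E0 [EI HR]]]]]]. cbv zeta in HR. destruct HR as [H1 H2].
    assert (Ht : forall i, (i <= I)%nat -> exists t, g t = (w i, z i)) by (intros i Hi; apply HGam, HG, Hi).
    set (t := fun i => epsilon (inhabits (fun _ : nat => O)) (fun t => g t = (w i, z i))).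
    assert (Ht' : forall i, (i <= I)%nat -> g (t i) = (w i, z i)) by (intros i Hi; apply (epsilon_spec _ _ (Ht i Hi))).
    set (s := joinN t).
    assert (HWs : forall i, (i <= I)%nat -> W s i = w i /\ Z s i = z i).
    { intros i Hi. unfold W, Z, s. rewrite pi_join, Ht'; auto. }
    exists I, s. split; [split|].
    + intros i Hi. rewrite (proj1 (HWs _ (sel_le i I Hi))), (proj2 (HWs _ Hi)), <- sel_eq. apply H1; auto.
    + rewrite <- H2. apply rsum_ext. intros i Hi.
      rewrite (proj1 (HWs _ (sel_le i I ltac:(lia)))), (proj2 (HWs i ltac:(lia))), (proj1 (HWs i ltac:(lia))), <- sel_eq. reflexivity.
    + rewrite (proj1 (HWs O ltac:(lia))), (proj2 (HWs I ltac:(lia))). congruence.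
Qed.
End GpAn.

Lemma Gp_fin {X} (dL : X -> X -> ER) Gam w z : Gprime dL Gam w z -> exists r, dL w z = Fin r.
Proof.
  intros [I [w' [z' [HG [E0 [EI HR]]]]]]. cbv zeta in HR. destruct HR as [H1 _].
  specialize (H1 I (le_n I)). rewrite Nat.eqb_refl in H1. subst.
  destruct (dL (w' O) (z' I)) as [r|]; [eauto|congruence].
Qed.

Lemma sa_base {T} (d : T -> T -> R) A : analytic d A -> sigma_analytic d A.
Proof. apply sg_base. Qed.
Lemma sa_diff {T} (d : T -> T -> R) A C B : analytic d A -> analytic d C ->
  (forall x, B x <-> A x /\ ~ C x) -> sigma_analytic d B.
Proof.
  intros HA HC E. eapply sg_ext; [apply sg_compl, (sg_union _ (fun n => match n with O => fun x => ~ A x | _ => C end))|].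
  - intros [|n]; [apply sg_compl, sg_base, HA|apply sg_base, HC].
  - intros x; rewrite E; split.
    + intros H; split; [apply NNPP; intros Hn; apply H; exists O; auto|intros Hc; apply H; exists 1%nat; auto].
    + intros [Ha Hc] [[|n] H]; auto.
Qed.

Definition join3 (a b c : BB) : BB := joinN (fun n => match n with O => a | 1%nat => b | _ => c end).

Section GAn.
Variable X : Type.
Variable d : X -> X -> R.
Variable dL : X -> X -> ER.
Variable Gam : X * X -> Prop.
Hypothesis Hpol : polish d.
Hypothesis HdLb : borel_ext_fun d dL.
Hypothesis HGsc : sigma_compact (pdist d) Gam.

Lemma G_an : analytic (pdist d) (fun p => Grel dL Gam (fst p) (snd p)).
Proof.
  destruct (polish_analytic d Hpol) as [HX|[fX [HfX HX]]].
  { left; intros [x y] _; apply (HX x); auto. }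
  destruct (Gp_an X d dL Gam Hpol HdLb HGsc) as [He|[g [Hg HG]]].
  { left; intros [x y] [w [z [Hw _]]]; apply (He (w, z)); auto. }
  set (w := fun s => fst (g (piN 0 s))). set (z := fun s => snd (g (piN 0 s))).
  set (x := fun s => fX (piN 1 s)). set (y := fun s => fX (piN 2 s)).
  assert (Hw : baire_continuous d w).
  { apply (baire_mcont (pdist d) d (fun s => g (piN 0 s)) fst); [apply baire_comp; auto; apply pcont_pi|apply mcont_fst]. }
  assert (Hz : baire_continuous d z).
  { apply (baire_mcont (pdist d) d (fun s => g (piN 0 s)) snd); [apply baire_comp; auto; apply pcont_pi|apply mcont_snd]. }
  assert (Hx : baire_continuous d x) by (apply (baire_comp d fX (piN 1)); auto; apply pcont_pi).
  assert (Hy : baire_continuous d y) by (apply (baire_comp d fX (piN 2)); auto; apply pcont_pi).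
  set (S' := fun s => dL (w s) (x s) <> PInf /\ dL (x s) (y s) <> PInf /\ dL (y s) (z s) <> PInf /\
     er_val (dL (w s) (x s)) + er_val (dL (x s) (y s)) + er_val (dL (y s) (z s)) - er_val (dL (w s) (z s)) = 0).
  assert (HS : sigN S').
  { assert (F : forall a b, baire_continuous d a -> baire_continuous d b -> sigN (fun s => dL (a s) (b s) <> PInf)).
    { intros a b Ha Hb. eapply sigN_ext; [apply (dl_fin_sig X d dL HdLb _ (baire_pair d _ _ Ha Hb))|]. intros s; simpl; tauto. }
    assert (M : forall a b, baire_continuous d a -> baire_continuous d b -> meas (fun s => er_val (dL (a s) (b s)))).
    { intros a b Ha Hb. eapply meas_ext; [apply (dl_val_meas X d dL HdLb _ (baire_pair d _ _ Ha Hb))|]. intros s; reflexivity. }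
    repeat apply sigN_and; auto. apply meas_eq. repeat apply meas_minus || apply meas_plus; auto. }
  eapply analytic_ext; [apply (img_analytic (pdist d) S' (fun s => (x s, y s)) (proj1 HS) (baire_pair d _ _ Hx Hy))|].
  intros [a b]; simpl; split.
  - intros [s [[H1 [H2 [H3 H4]]] E]]. inversion E; subst a b.
    exists (w s), (z s). assert (Gp : Gprime dL Gam (w s) (z s)).
    { apply (HG (w s, z s)). exists (piN 0 s). unfold w, z; apply surjective_pairing. }
    split; auto. destruct (Gp_fin dL Gam _ _ Gp) as [e He]. rewrite He in *.
    destruct (dL (w s) (x s)) as [p|]; [|congruence]. destruct (dL (x s) (y s)) as [q|]; [|congruence].
    destruct (dL (y s) (z s)) as [r|]; [|congruence]. simpl in *. f_equal; lra.
  - intros [w0 [z0 [Gp Eq]]].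
    destruct (proj1 (HG (w0, z0)) Gp) as [t0 Ht0]. destruct (proj1 (HX a) I) as [t1 Ht1].
    destruct (proj1 (HX b) I) as [t2 Ht2].
    exists (join3 t0 t1 t2).
    assert (E0 : piN 0 (join3 t0 t1 t2) = t0) by (unfold join3; rewrite pi_join; auto).
    assert (E1 : piN 1 (join3 t0 t1 t2) = t1) by (unfold join3; rewrite pi_join; auto).
    assert (E2 : piN 2 (join3 t0 t1 t2) = t2) by (unfold join3; rewrite pi_join; auto).
    unfold S', w, x, y, z; rewrite E0, E1, E2, Ht0, Ht1, Ht2; simpl. split; [|auto].
    destruct (Gp_fin dL Gam _ _ Gp) as [e He]. rewrite He in Eq.
    destruct (dL w0 a) as [p|]; [|discriminate]. destruct (dL a b) as [q|]; [|discriminate].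
    destruct (dL b z0) as [r|]; [|discriminate]. rewrite He. simpl in *. inversion Eq.
    repeat split; try discriminate. lra.
Qed.

Lemma Ein_an : analytic d (fun y => exists z, Grel dL Gam z y /\ z <> y).
Proof.
  eapply analytic_ext; [apply (analytic_img (pdist d) d _ snd (analytic_inter_borel _ _ _ G_an (sg_base _ _ (offdiag_open d (proj1 Hpol)))) (mcont_snd d))|].
  intros y; split.
  - intros [[a b] [[H1 H2] E]]; simpl in *; subst; eauto.
  - intros [z [H1 H2]]; exists (z, y); simpl; auto.
Qed.
Lemma Eout_an : analytic d (fun y => exists z, Grel dL Gam y z /\ z <> y).
Proof.
  eapply analytic_ext; [apply (analytic_img (pdist d) d _ fst (analytic_inter_borel _ _ _ G_an (sg_base _ _ (offdiag_open d (proj1 Hpol)))) (mcont_fst d))|].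
  intros y; split.
  - intros [[a b] [[H1 H2] E]]; simpl in *; subst; eauto.
  - intros [z [H1 H2]]; exists (y, z); simpl; auto.
Qed.

Lemma part1 :
  (sigma_analytic (pdist d) (fun p => aset dL Gam (fst p) (snd p)) /\
   sigma_analytic (pdist d) (fun p => bset dL Gam (fst p) (snd p)) /\
   forall A : X -> Prop, analytic d A ->
     sigma_analytic d (rimg (aset dL Gam) A) /\ sigma_analytic d (rimg (bset dL Gam) A)).
Proof.
  assert (Hm := proj1 Hpol). assert (Hpm := pdist_metric d Hm).
  assert (HXa := polish_analytic d Hpol).
  assert (Gi : analytic (pdist d) (fun p => Grel dL Gam (snd p) (fst p))).
  { eapply analytic_ext; [apply (analytic_img _ _ _ _ G_an (mcont_swap d))|].
    intros [a b]; split; [intros [[c e] [H E]]; inversion E; subst; auto|intros H; exists (b, a); auto]. }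
  assert (Ini : forall y, (forall z, Grel dL Gam z y -> z = y) <-> ~ exists z, Grel dL Gam z y /\ z <> y).
  { intros y; split; [intros H [z [H1 H2]]; apply H2, H, H1|intros H z Hz; apply NNPP; intros Hn; apply H; eauto]. }
  assert (Ter : forall y, (forall z, Grel dL Gam y z -> z = y) <-> ~ exists z, Grel dL Gam y z /\ z <> y).
  { intros y; split; [intros H [z [H1 H2]]; apply H2, H, H1|intros H z Hz; apply NNPP; intros Hn; apply H; eauto]. }
  split; [|split].
  - apply (sa_diff _ _ _ _ Gi (analytic_prod d _ _ HXa Ein_an)).
    intros [a b]; unfold aset; simpl. rewrite Ini; tauto.
  - apply (sa_diff _ _ _ _ (analytic_ext _ _ _ G_an (fun _ => iff_refl _)) (analytic_prod d _ _ HXa Eout_an)).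
    intros [a b]; unfold bset; simpl. rewrite Ter; tauto.
  - intros A HA. split.
    + apply (sa_diff d (fun y => exists x, A x /\ Grel dL Gam y x) (fun y => exists z, Grel dL Gam z y /\ z <> y)).
      * eapply analytic_ext; [apply (analytic_img _ _ _ fst (analytic_and _ _ _ Hpm G_an (analytic_prod d _ _ HXa HA)) (mcont_fst d))|].
        intros y; split; [intros [[a b] [[H1 [_ H2]] E]]; simpl in *; subst; eauto|intros [x [H1 H2]]; exists (y, x); simpl; auto].
      * apply Ein_an.
      * intros y; unfold rimg, aset. rewrite <- Ini. split; [intros [x [H1 [H2 H3]]]; eauto|intros [[x [H1 H2]] H3]; eauto].
    + apply (sa_diff d (fun y => exists x, A x /\ Grel dL Gam x y) (fun y => exists z, Grel dL Gam y z /\ z <> y)).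
      * eapply analytic_ext; [apply (analytic_img _ _ _ snd (analytic_and _ _ _ Hpm G_an (analytic_prod d _ _ HA HXa)) (mcont_snd d))|].
        intros y; split; [intros [[a b] [[H1 [H2 _]] E]]; simpl in *; subst; eauto|intros [x [H1 H2]]; exists (x, y); simpl; auto].
      * apply Eout_an.
      * intros y; unfold rimg, bset. rewrite <- Ter. split; [intros [x [H1 [H2 H3]]]; eauto|intros [[x [H1 H2]] H3]; eauto].
Qed.
End GAn.

Section Geo.
Variable X : Type.
Variable dL : X -> X -> ER.
Hypothesis HdL : is_ext_distance dL.
Variable Gam : X * X -> Prop.

Lemma d_nn x y a : dL x y = Fin a -> 0 <= a.
Proof. apply (proj1 HdL). Qed.
Lemma d_zero x : dL x x = Fin 0.
Proof. apply (proj1 (proj2 HdL)); auto. Qed.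
Lemma d_eq0 x y : dL x y = Fin 0 -> x = y.
Proof. apply (proj1 (proj2 HdL)). Qed.
Lemma d_sym x y : dL x y = dL y x.
Proof. apply (proj1 (proj2 (proj2 HdL))). Qed.
Lemma d_tri x y z a b : dL x y = Fin a -> dL y z = Fin b -> exists c, dL x z = Fin c /\ c <= a + b.
Proof.
  intros H1 H2. pose proof (proj2 (proj2 (proj2 HdL)) x y z) as T. rewrite H1, H2 in T; simpl in T.
  destruct (dL x z) as [c|]; [exists c; auto|contradiction].
Qed.
Lemma d_tri' x y z a b c : dL x y = Fin a -> dL y z = Fin b -> dL x z = Fin c -> c <= a + b.
Proof. intros H1 H2 H3. destruct (d_tri x y z a b H1 H2) as [c' [E L]]. rewrite H3 in E; inversion E; lra. Qed.
Lemma Fin_inj a b : Fin a = Fin b -> a = b.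
Proof. intros H; inversion H; auto. Qed.

Lemma Grel_r u v : Grel dL Gam u v -> exists w z a b c, Gprime dL Gam w z /\ dL w u = Fin a /\
  dL u v = Fin b /\ dL v z = Fin c /\ dL w z = Fin (a + b + c).
Proof.
  intros [w [z [Gp E]]]. exists w, z.
  destruct (dL w u) as [a|]; [|simpl in E; destruct (Gp_fin dL Gam w z Gp) as [r Hr]; congruence].
  destruct (dL u v) as [b|]; [|simpl in E; destruct (Gp_fin dL Gam w z Gp) as [r Hr]; congruence].
  destruct (dL v z) as [c|]; [|simpl in E; destruct (Gp_fin dL Gam w z Gp) as [r Hr]; congruence].
  exists a, b, c. simpl in E. repeat split; auto.
Qed.
Lemma Grel_mk w z u v a b c : Gprime dL Gam w z -> dL w u = Fin a ->
  dL u v = Fin b -> dL v z = Fin c -> dL w z = Fin (a + b + c) -> Grel dL Gam u v.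
Proof. intros Gp H1 H2 H3 H4. exists w, z; split; auto. rewrite H1, H2, H3, H4; reflexivity. Qed.

Lemma Grel_sub u v m p q : Grel dL Gam u v -> dL u m = Fin p -> dL m v = Fin q -> dL u v = Fin (p + q) ->
  Grel dL Gam u m /\ Grel dL Gam m v.
Proof.
  intros G H1 H2 H3. destruct (Grel_r u v G) as [w [z [a [b [c [Gp [E1 [E2 [E3 E4]]]]]]]]].
  rewrite H3 in E2; apply Fin_inj in E2; subst b.
  destruct (d_tri m v z q c H2 E3) as [t [Et Lt]].
  destruct (d_tri w u m a p E1 H1) as [t' [Et' Lt']].
  pose proof (d_tri' w m z t' t _ Et' Et E4).
  split.
  - apply (Grel_mk w z u m a p t); auto. rewrite E4; f_equal; lra.
  - apply (Grel_mk w z m v t' q c); auto. rewrite E4; f_equal; lra.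
Qed.

Hypothesis Hgeod : geodesic_space dL.

Lemma Grel_mid u v : Grel dL Gam u v -> u <> v ->
  exists m, Grel dL Gam u m /\ Grel dL Gam m v /\ m <> u /\ m <> v.
Proof.
  intros G Hn. destruct (Grel_r u v G) as [w [z [a [b [c [Gp [E1 [E2 [E3 E4]]]]]]]]].
  destruct (Hgeod u v b E2) as [g [[D [HD Hg]] [G0 G1]]].
  rewrite G0, G1, E2 in HD; apply Fin_inj in HD; subst D.
  assert (Hm1 := Hg 0 (1/2) ltac:(lra) ltac:(lra)). assert (Hm2 := Hg (1/2) 1 ltac:(lra) ltac:(lra)).
  rewrite G0 in Hm1; rewrite G1 in Hm2.
  replace (Rabs (1/2 - 0) * b) with (b/2) in Hm1 by (rewrite Rabs_right; lra).
  replace (Rabs (1 - 1/2) * b) with (b/2) in Hm2 by (rewrite Rabs_right; lra).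
  assert (Hb : b <> 0) by (intros ->; apply Hn, d_eq0, E2).
  destruct (Grel_sub u v (g (1/2)) (b/2) (b/2) G Hm1 Hm2 ltac:(rewrite E2; f_equal; lra)) as [A1 A2].
  exists (g (1/2)); repeat split; auto.
  - intros E; rewrite E, d_zero in Hm1; apply Fin_inj in Hm1; lra.
  - intros E; rewrite E, d_zero in Hm2; apply Fin_inj in Hm2; lra.
Qed.

Lemma init_eq x y : Grel dL Gam x y -> (forall z, Grel dL Gam z y -> z = y) -> x = y.
Proof.
  intros G Hi. destruct (Grel_r x y G) as [w [z [a [b [c [Gp [E1 [E2 [E3 E4]]]]]]]]].
  destruct (d_tri w x y a b E1 E2) as [t [Et Lt]].
  pose proof (d_tri' w y z t c _ Et E3 E4).
  assert (Gw : Grel dL Gam w y).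
  { apply (Grel_mk w z w y 0 t c); auto; [apply d_zero|rewrite E4; f_equal; lra]. }
  apply Hi in Gw; subst w. rewrite d_zero in Et; apply Fin_inj in Et.
  pose proof (d_nn _ _ _ E1); pose proof (d_nn _ _ _ E2).
  apply d_eq0. rewrite E2; f_equal; lra.
Qed.

Let G := Grel dL Gam.
Let a := aset dL Gam.
Let b := bset dL Gam.
Let T := Tset dL Gam.
Let Te := Teset dL Gam.

Lemma part2 : forall x y, a x y -> b x y -> Te x -> False.
Proof.
  intros x y [Ha1 Ha2] [Hb1 Hb2] HT. pose proof (init_eq x y Hb1 Ha2); subst y.
  destruct HT as [[y0 [H1 H2]]|[y0 [H1 H2]]].
  - apply H2; symmetry; apply Ha2, H1.
  - apply H2; symmetry; apply Hb2, H1.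
Qed.

Lemma part4a : forall y, rimg a T y <-> rimg a Te y.
Proof.
  intros y; split; [intros [x [[H1 H2] H3]]; exists x; split; [right; auto|auto]|].
  intros [x [HT [Ha1 Ha2]]].
  destruct (classic (y = x)) as [E|E].
  - subst y. destruct HT as [[y0 [H1 H2]]|[y0 [H1 H2]]].
    + exfalso; apply H2; symmetry; apply Ha2, H1.
    + destruct (Grel_mid x y0 H1 H2) as [m [M1 [M2 [M3 M4]]]].
      exists m; split; [split; [exists x; split; auto|exists y0; split; auto]|split; auto].
  - destruct (Grel_mid y x Ha1 E) as [m [M1 [M2 [M3 M4]]]].
    exists m; split; [split; [exists y; split; auto|exists x; split; auto]|split; auto].
Qed.

Lemma part4b : forall y, rimg b T y <-> rimg b Te y.
Proof.
  intros y; split; [intros [x [[H1 H2] H3]]; exists x; split; [right; auto|auto]|].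
  intros [x [HT [Hb1 Hb2]]].
  destruct (classic (y = x)) as [E|E].
  - subst y. destruct HT as [[y0 [H1 H2]]|[y0 [H1 H2]]].
    + destruct (Grel_mid y0 x H1 (fun e => H2 (eq_sym e))) as [m [M1 [M2 [M3 M4]]]].
      exists m; split; [split; [exists y0; split; auto|exists x; split; auto]|split; auto].
    + exfalso; apply H2; symmetry; apply Hb2, H1.
  - destruct (Grel_mid x y Hb1 (fun e => E (eq_sym e))) as [m [M1 [M2 [M3 M4]]]].
    exists m; split; [split; [exists x; split; auto|exists y; split; auto]|split; auto].
Qed.

Lemma part5a : forall x, Te x <-> T x \/ rimg a T x \/ rimg b T x.
Proof.
  intros x; split.
  - intros HT. destruct (classic (T x)) as [H|H]; [left; auto|right].
    destruct HT as [[y0 [H1 H2]]|[y0 [H1 H2]]].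
    + right. assert (Hn : forall z, Grel dL Gam x z -> z = x).
      { intros z Hz; apply NNPP; intros Hne; apply H; split; [exists y0; auto|exists z; split; auto]. }
      destruct (Grel_mid y0 x H1 (fun e => H2 (eq_sym e))) as [m [M1 [M2 [M3 M4]]]].
      exists m; split; [split; [exists y0; split; auto|exists x; split; auto]|split; auto].
    + left. assert (Hn : forall z, Grel dL Gam z x -> z = x).
      { intros z Hz; apply NNPP; intros Hne; apply H; split; [exists z; split; auto|exists y0; auto]. }
      destruct (Grel_mid x y0 H1 H2) as [m [M1 [M2 [M3 M4]]]].
      exists m; split; [split; [exists x; split; auto|exists y0; split; auto]|split; auto].
  - intros [H|[[m [[H1 H2] [Ha1 Ha2]]]|[m [[H1 H2] [Hb1 Hb2]]]]]; [left; apply H| |].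
    + destruct (classic (x = m)) as [E|E].
      * subst. destruct H1 as [y0 [Y1 Y2]]. exfalso; apply Y2; symmetry; apply Ha2, Y1.
      * right; exists m; split; auto.
    + destruct (classic (x = m)) as [E|E].
      * subst. destruct H2 as [y0 [Y1 Y2]]. exfalso; apply Y2; symmetry; apply Hb2, Y1.
      * left; exists m; split; auto.
Qed.

Lemma part5b : forall x, T x -> ~ (rimg a T x \/ rimg b T x).
Proof.
  intros x [[y1 [A1 A2]] [y2 [B1 B2]]] [[m [_ [_ H]]]|[m [_ [_ H]]]].
  - apply A2; symmetry; apply H, A1.
  - apply B2; symmetry; apply H, B1.
Qed.
End Geo.

Lemma fin_val a : a <> PInf -> a = Fin (er_val a).
Proof. destruct a; simpl; congruence. Qed.
Lemma ersum_fin f m : (forall k, (k < m)%nat -> f k <> PInf) -> ersum f m = Fin (rsum (fun k => er_val (f k)) m).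
Proof.
  induction m as [|m IH]; intros H; simpl; auto. rewrite IH by (intros; apply H; lia).
  rewrite (fin_val (f m)) by (apply H; lia). reflexivity.
Qed.
Lemma rsum_add f m k : rsum f (m + k) = rsum f m + rsum (fun j => f (m + j)%nat) k.
Proof. induction k as [|k IH]; simpl; [rewrite Nat.add_0_r; lra|]. rewrite Nat.add_succ_r; simpl; lra. Qed.
Lemma rsum_minus f g n : rsum (fun i => f i - g i) n = rsum f n - rsum g n.
Proof. induction n; simpl; lra. Qed.

Section Mono.
Variable X : Type.
Variable dL : X -> X -> ER.
Variable Gam : X * X -> Prop.
Hypothesis HGcm : cyclically_monotone dL Gam.
Hypothesis HGfin : forall p, Gam p -> dL (fst p) (snd p) <> PInf.

Lemma chain_sum I (W Z : nat -> X) :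
  (forall i, (i <= I)%nat -> dL (if Nat.eqb (S i) (S I) then W O else W (S i)) (Z i) <> PInf) ->
  rsum (fun i => er_val (dL (if Nat.eqb (S i) (S I) then W O else W (S i)) (Z i)) - er_val (dL (W i) (Z i))) (S I) = 0 ->
  rsum (fun i => er_val (dL (W i) (Z i))) (S I) = rsum (fun i => er_val (dL (W (S i)) (Z i))) I + er_val (dL (W O) (Z I)).
Proof.
  intros _ H. rewrite rsum_minus in H. simpl in H. rewrite Nat.eqb_refl in H.
  rewrite (rsum_ext (fun i => er_val (dL (if Nat.eqb (S i) (S I) then W O else W (S i)) (Z i))) (fun i => er_val (dL (W (S i)) (Z i)))) in H.
  - simpl; lra.
  - intros i Hi. destruct (Nat.eqb_spec (S i) (S I)); [lia|auto].
Qed.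

Lemma Gp_mono w1 z1 w2 z2 e1 e2 a b :
  Gprime dL Gam w1 z1 -> Gprime dL Gam w2 z2 -> dL w1 z1 = Fin e1 -> dL w2 z2 = Fin e2 ->
  dL w2 z1 = Fin a -> dL w1 z2 = Fin b -> e1 + e2 <= a + b.
Proof.
  intros [I [W [Z [HG1 [E10 [E1I HR1]]]]]] [J [W2 [Z2 [HG2 [E20 [E2J HR2]]]]]] He1 He2 Ha Hb.
  cbv zeta in HR1, HR2. destruct HR1 as [F1 S1], HR2 as [F2 S2].
  pose proof (chain_sum I W Z F1 S1) as C1. pose proof (chain_sum J W2 Z2 F2 S2) as C2.
  subst w1 z1 w2 z2. rewrite He1 in C1; rewrite He2 in C2; simpl in C1, C2.
  set (n := (I + J + 1)%nat).
  set (x := fun k => if Nat.leb k I then W k else W2 (k - S I)%nat).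
  set (y := fun k => if Nat.leb k I then Z k else Z2 (k - S I)%nat).
  assert (Hx1 : forall k, (k <= I)%nat -> x k = W k /\ y k = Z k).
  { intros k Hk; unfold x, y; destruct (Nat.leb_spec k I); [auto|lia]. }
  assert (Hx2 : forall j, x (S I + j)%nat = W2 j /\ y (S I + j)%nat = Z2 j).
  { intros j; unfold x, y; destruct (Nat.leb_spec (S I + j) I); [lia|]. replace (S I + j - S I)%nat with j by lia; auto. }
  assert (HGxy : forall k, (k <= n)%nat -> Gam (x k, y k)).
  { intros k Hk. destruct (Nat.le_gt_cases k I) as [H|H].
    - destruct (Hx1 k H) as [-> ->]; apply HG1; auto.
    - replace k with (S I + (k - S I))%nat by lia. destruct (Hx2 (k - S I)%nat) as [-> ->]. apply HG2; unfold n in Hk; lia. }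
  pose proof (HGcm n x y HGxy) as CM. cbv zeta in CM.
  set (x' := fun i => if Nat.eqb i (S n) then x O else x i) in CM.
  rewrite ersum_fin in CM by (intros k Hk; apply (HGfin (x k, y k)), HGxy; lia).
  assert (RF : forall k, (k < S n)%nat -> dL (x' (S k)) (y k) = Fin (
      if Nat.ltb k I then er_val (dL (W (S k)) (Z k)) else if Nat.eqb k I then a
      else if Nat.ltb k n then er_val (dL (W2 (S (k - S I)%nat)) (Z2 (k - S I)%nat)) else b)).
  { intros k Hk. unfold x'.
    destruct (Nat.ltb_spec k I).
    - destruct (Nat.eqb_spec (S k) (S n)); [unfold n in *; lia|]. destruct (Hx1 (S k) ltac:(lia)) as [-> _].
      destruct (Hx1 k ltac:(lia)) as [_ ->]. apply fin_val.
      specialize (F1 k ltac:(lia)). destruct (Nat.eqb_spec (S k) (S I)); [lia|auto].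
    - destruct (Nat.eqb_spec k I).
      + subst k. destruct (Nat.eqb_spec (S I) (S n)); [unfold n in *; lia|].
        pose proof (Hx2 O) as [E1 _]. rewrite Nat.add_0_r in E1. rewrite E1. destruct (Hx1 I (le_n I)) as [_ ->]. auto.
      + destruct (Nat.ltb_spec k n).
        * destruct (Nat.eqb_spec (S k) (S n)); [lia|].
          replace (S k) with (S I + S (k - S I))%nat by lia. destruct (Hx2 (S (k - S I))) as [-> _].
          replace k with (S I + (k - S I))%nat at 2 by lia. destruct (Hx2 (k - S I)%nat) as [_ ->].
          apply fin_val. specialize (F2 (k - S I)%nat ltac:(unfold n in *; lia)).
          destruct (Nat.eqb_spec (S (k - S I)) (S J)); [unfold n in *; lia|auto].
        * assert (k = n) by lia. subst k. rewrite Nat.eqb_refl. destruct (Hx1 O ltac:(lia)) as [-> _].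
          replace n with (S I + J)%nat by (unfold n; lia). destruct (Hx2 J) as [_ ->]. auto. }
  rewrite (ersum_fin (fun k => dL (x' (S k)) (y k))) in CM by (intros k Hk; rewrite RF; auto; discriminate).
  cbn [er_le] in CM.
  rewrite (rsum_ext (fun k => er_val (dL (x' (S k)) (y k))) (fun k => if Nat.ltb k I then er_val (dL (W (S k)) (Z k)) else if Nat.eqb k I then a
      else if Nat.ltb k n then er_val (dL (W2 (S (k - S I)%nat)) (Z2 (k - S I)%nat)) else b)) in CM
    by (intros k Hk; rewrite RF; auto).
  replace (S n) with (S I + S J)%nat in CM by (unfold n; lia).
  rewrite !rsum_add in CM.
  rewrite (rsum_ext (fun j => er_val (dL (x (S I + j)%nat) (y (S I + j)%nat))) (fun j => er_val (dL (W2 j) (Z2 j)))) in CM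
    by (intros j _; destruct (Hx2 j) as [-> ->]; auto).
  rewrite (rsum_ext (fun k => er_val (dL (x k) (y k))) (fun k => er_val (dL (W k) (Z k))) (S I)) in CM
    by (intros k Hk; destruct (Hx1 k ltac:(lia)) as [-> ->]; auto).
  rewrite (rsum_ext (fun j => if Nat.ltb (S I + j) I then _ else _) (fun j => if Nat.ltb j J then er_val (dL (W2 (S j)) (Z2 j)) else b)) in CM.
  2:{ intros j Hj. destruct (Nat.ltb_spec (S I + j) I); [lia|]. destruct (Nat.eqb_spec (S I + j) I); [lia|].
      destruct (Nat.ltb_spec (S I + j) n); destruct (Nat.ltb_spec j J); try (unfold n in *; lia).
      - replace (S I + j - S I)%nat with j by lia. auto.
      - auto. }
  rewrite (rsum_ext (fun k => if Nat.ltb k I then _ else _) (fun k => if Nat.ltb k I then er_val (dL (W (S k)) (Z k)) else a) (S I)) in CM.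
  2:{ intros k Hk. destruct (Nat.ltb_spec k I); auto. destruct (Nat.eqb_spec k I); [auto|lia]. }
  simpl in CM. rewrite Nat.ltb_irrefl in CM. rewrite Nat.ltb_irrefl in CM.
  rewrite (rsum_ext (fun k => if Nat.ltb k I then _ else a) (fun k => er_val (dL (W (S k)) (Z k))) I) in CM
    by (intros k Hk; destruct (Nat.ltb_spec k I); [auto|lia]).
  rewrite (rsum_ext (fun j => if Nat.ltb j J then _ else b) (fun j => er_val (dL (W2 (S j)) (Z2 j))) J) in CM
    by (intros k Hk; destruct (Nat.ltb_spec k J); [auto|lia]).
  simpl in C1, C2. lra.
Qed.
End Mono.

Section NB.
Variable X : Type.
Variable dL : X -> X -> ER.
Hypothesis HdL : is_ext_distance dL.
Hypothesis Hgeod : geodesic_space dL.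
Hypothesis Hnb : non_branching dL.

Lemma geo_get x y D : dL x y = Fin D -> exists g : R -> X, g 0 = x /\ g 1 = y /\
  forall s t, 0 <= s <= 1 -> 0 <= t <= 1 -> s <= t ->
    dL (g s) (g t) = Fin ((t - s) * D) /\ dL (g t) (g s) = Fin ((t - s) * D).
Proof.
  intros H. destruct (Hgeod x y D H) as [g [[D' [HD Hg]] [G0 G1]]].
  rewrite G0, G1, H in HD. apply Fin_inj in HD; subst D'.
  exists g; repeat split; auto.
  - rewrite (Hg s t H0 H1). rewrite Rabs_right by lra. auto.
  - rewrite (Hg t s H1 H0). rewrite Rabs_left1 by lra. f_equal; lra.
Qed.

Lemma sq4 z u m y A B C E : dL z u = Fin A -> dL u m = Fin B -> dL m y = Fin C -> dL z y = Fin E -> E <= A + B + C.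
Proof.
  intros H1 H2 H3 H4. destruct (d_tri X dL HdL u m y B C H2 H3) as [t [Et Lt]].
  pose proof (d_tri' X dL HdL z u y A t E H1 Et H4). lra.
Qed.

Lemma nb_core z x y y' L p p' : dL z x = Fin L -> 0 < L -> dL x y = Fin p -> dL x y' = Fin p' ->
  0 < p -> p <= p' -> dL z y = Fin (L + p) -> dL z y' = Fin (L + p') -> dL y' y = Fin (p' - p).
Proof.
  intros Hzx HL Hxy Hxy' Hp Hpp Hzy Hzy'.
  destruct (nat_above (p / L)) as [n Hn].
  assert (Hn0 : 0 < INR n) by (assert (0 < p / L) by (apply Rdiv_lt_0_compat; lra); lra).
  set (dl := p / INR n).
  assert (Hdl : 0 < dl) by (apply Rdiv_lt_0_compat; lra).
  assert (Hndl : INR n * dl = p) by (unfold dl; field; lra).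
  assert (HdlL : dl < L).
  { assert (A : (p / L) * L < INR n * L) by (apply Rmult_lt_compat_r; lra).
    replace ((p / L) * L) with p in A by (field; lra).
    apply (Rmult_lt_reg_r (INR n)); [lra|]. unfold dl. replace (p / INR n * INR n) with p by (field; lra). lra. }
  destruct (geo_get z x L Hzx) as [be [B0 [B1 Hbe]]].
  destruct (geo_get x y p Hxy) as [ga [Ga0 [Ga1 Hga]]].
  destruct (geo_get x y' p' Hxy') as [gb [Gb0 [Gb1 Hgb]]].
  set (u := be (1 - dl / L)).
  assert (Hdl1 : 0 <= dl / L <= 1).
  { split; [left; apply Rdiv_lt_0_compat; lra|]. apply (Rmult_le_reg_r L); [lra|].
    unfold Rdiv; rewrite Rmult_assoc, Rinv_l by lra. lra. }
  assert (Hux : dL u x = Fin dl).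
  { rewrite <- B1. unfold u. rewrite (proj1 (Hbe (1 - dl/L) 1 ltac:(lra) ltac:(lra) ltac:(lra))). f_equal; field; lra. }
  assert (Hzu : dL z u = Fin (L - dl)).
  { rewrite <- B0 at 1. unfold u. rewrite (proj1 (Hbe 0 (1 - dl/L) ltac:(lra) ltac:(lra) ltac:(lra))). f_equal; field; lra. }
  set (P := fun k => ga (INR k / INR n)).
  set (Q := fun k => gb (INR k * dl / p')).
  assert (Hk1 : forall k, (k <= n)%nat -> 0 <= INR k / INR n <= 1).
  { intros k Hk. pose proof (le_INR _ _ Hk). pose proof (pos_INR k). split.
    - apply Rmult_le_pos; [lra|left; apply Rinv_0_lt_compat; lra].
    - apply (Rmult_le_reg_r (INR n)); [lra|]. unfold Rdiv; rewrite Rmult_assoc, Rinv_l by lra. lra. }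
  assert (Hk2 : forall k, (k <= n)%nat -> 0 <= INR k * dl / p' <= 1).
  { intros k Hk. pose proof (le_INR _ _ Hk). pose proof (pos_INR k).
    assert (INR k * dl <= p) by (rewrite <- Hndl; apply Rmult_le_compat_r; lra). split.
    - apply Rmult_le_pos; [apply Rmult_le_pos; lra|left; apply Rinv_0_lt_compat; lra].
    - apply (Rmult_le_reg_r p'); [lra|]. unfold Rdiv; rewrite Rmult_assoc, Rinv_l by lra. lra. }
  assert (PP : forall j k, (j <= k)%nat -> (k <= n)%nat -> dL (P j) (P k) = Fin ((INR k - INR j) * dl)).
  { intros j k Hjk Hk. unfold P. rewrite (proj1 (Hga _ _ (Hk1 j ltac:(lia)) (Hk1 k Hk) ltac:(apply Rmult_le_compat_r; [left; apply Rinv_0_lt_compat; lra|apply le_INR; auto]))).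
    f_equal; unfold dl; field; lra. }
  assert (QQ : forall j k, (j <= k)%nat -> (k <= n)%nat -> dL (Q j) (Q k) = Fin ((INR k - INR j) * dl)).
  { intros j k Hjk Hk. unfold Q.
    rewrite (proj1 (Hgb _ _ (Hk2 j ltac:(lia)) (Hk2 k Hk) ltac:(apply Rmult_le_compat_r; [left; apply Rinv_0_lt_compat; lra|apply Rmult_le_compat_r; [lra|apply le_INR; auto]]))).
    f_equal; field; lra. }
  assert (P0 : P O = x) by (unfold P; simpl; rewrite <- Ga0; f_equal; field; lra).
  assert (Q0 : Q O = x) by (unfold Q; simpl; rewrite <- Gb0; f_equal; field; lra).
  assert (Pn : P n = y) by (unfold P; rewrite <- Ga1; f_equal; field; lra).
  assert (Qn : dL (Q n) y' = Fin (p' - p)).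
  { unfold Q. rewrite <- Gb1. rewrite (proj1 (Hgb _ 1 (Hk2 n (le_n n)) ltac:(lra) ltac:(apply (Hk2 n (le_n n))))).
    f_equal. rewrite Hndl. field; lra. }
  assert (uP : forall k, (k <= n)%nat -> dL u (P k) = Fin (dl + INR k * dl)).
  { intros k Hk. pose proof (PP O k ltac:(lia) Hk) as A. rewrite P0 in A. simpl in A.
    destruct (d_tri X dL HdL u x (P k) _ _ Hux A) as [t [Et Lt]]. rewrite Et. f_equal.
    pose proof (PP k n Hk (le_n n)) as C. rewrite Pn in C.
    pose proof (sq4 z u (P k) y _ _ _ _ Hzu Et C Hzy). nra. }
  assert (uQ : forall k, (k <= n)%nat -> dL u (Q k) = Fin (dl + INR k * dl)).
  { intros k Hk. pose proof (QQ O k ltac:(lia) Hk) as A. rewrite Q0 in A. simpl in A.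
    destruct (d_tri X dL HdL u x (Q k) _ _ Hux A) as [t [Et Lt]]. rewrite Et. f_equal.
    pose proof (QQ k n Hk (le_n n)) as C.
    destruct (d_tri X dL HdL (Q k) (Q n) y' _ _ C Qn) as [t2 [Et2 Lt2]].
    pose proof (sq4 z u (Q k) y' _ _ _ _ Hzu Et Et2 Hzy'). nra. }
  assert (Ind : forall k, (S k <= n)%nat -> P k = Q k /\ P (S k) = Q (S k)).
  { induction k as [|k IH]; intros Hk.
    - split; [congruence|].
      apply (Hnb u x (2 * dl) ltac:(lra)).
      + rewrite Hux; f_equal; field.
      + rewrite uP by lia; simpl; f_equal; lra.
      + rewrite <- P0, PP by lia; simpl; f_equal; field.
      + rewrite uQ by lia; simpl; f_equal; lra.
      + rewrite <- Q0, QQ by lia; simpl; f_equal; field.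
    - destruct (IH ltac:(lia)) as [E1 E2]. split; auto.
      apply (Hnb (P k) (P (S k)) (2 * dl) ltac:(lra)).
      + rewrite PP by lia; f_equal; rewrite S_INR; field.
      + rewrite PP by lia; f_equal; rewrite !S_INR; field.
      + rewrite PP by lia; f_equal; rewrite !S_INR; field.
      + rewrite E1, QQ by lia; f_equal; rewrite !S_INR; field.
      + rewrite E2, QQ by lia; f_equal; rewrite !S_INR; field. }
  destruct n as [|m]; [simpl in Hn0; lra|].
  destruct (Ind m (le_n _)) as [_ E]. rewrite <- E, Pn in Qn. rewrite (d_sym X dL HdL); auto.
Qed.
End NB.

Section P3.
Variable X : Type.
Variable dL : X -> X -> ER.
Hypothesis HdL : is_ext_distance dL.
Hypothesis Hgeod : geodesic_space dL.
Hypothesis Hnb : non_branching dL.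
Variable Gam : X * X -> Prop.
Hypothesis HGcm : cyclically_monotone dL Gam.
Hypothesis HGfin : forall p, Gam p -> dL (fst p) (snd p) <> PInf.

Lemma align u x v : Grel dL Gam u x -> Grel dL Gam x v ->
  exists b1 b2, dL u x = Fin b1 /\ dL x v = Fin b2 /\ dL u v = Fin (b1 + b2).
Proof.
  intros G1 G2.
  destruct (Grel_r X dL Gam u x G1) as [w1 [z1 [a1 [b1 [c1 [Gp1 [E1 [E2 [E3 E4]]]]]]]]].
  destruct (Grel_r X dL Gam x v G2) as [w2 [z2 [a2 [b2 [c2 [Gp2 [F1 [F2 [F3 F4]]]]]]]]].
  destruct (d_tri X dL HdL w2 x z1 a2 c1 F1 E3) as [A [HA LA]].
  destruct (d_tri X dL HdL w1 u x a1 b1 E1 E2) as [t1 [Ht1 Lt1]].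
  destruct (d_tri X dL HdL x v z2 b2 c2 F2 F3) as [t2 [Ht2 Lt2]].
  destruct (d_tri X dL HdL w1 x z2 t1 t2 Ht1 Ht2) as [B [HB LB]].
  destruct (d_tri X dL HdL u x v b1 b2 E2 F2) as [t [Ht Lt]].
  pose proof (Gp_mono X dL Gam HGcm HGfin w1 z1 w2 z2 _ _ A B Gp1 Gp2 E4 F4 HA HB) as M.
  pose proof (sq4 X dL HdL w1 u v z2 a1 t c2 B E1 Ht F3 HB).
  exists b1, b2; repeat split; auto. rewrite Ht; f_equal; lra.
Qed.

Lemma p3a x y y' p p' : Tset dL Gam x -> aset dL Gam x y -> aset dL Gam x y' ->
  dL x y = Fin p -> dL x y' = Fin p' -> p <= p' -> y = y'.
Proof.
  intros [[y0 [G0 N0]] [z0 [Gz Nz]]] [Ga Ia] [Ga' Ia'] Hp Hp' Hle.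
  destruct (align y x z0 Ga Gz) as [b1 [L [B1 [BL BZ]]]].
  destruct (align y' x z0 Ga' Gz) as [b1' [L' [B1' [BL' BZ']]]].
  rewrite BL in BL'; apply Fin_inj in BL'; subst L'.
  rewrite (d_sym X dL HdL) in B1; rewrite Hp in B1; apply Fin_inj in B1; subst b1.
  rewrite (d_sym X dL HdL) in B1'; rewrite Hp' in B1'; apply Fin_inj in B1'; subst b1'.
  assert (HL : 0 < L).
  { destruct (d_nn X dL HdL _ _ _ BL) as [h|h]; auto. subst. exfalso; apply Nz, d_eq0 with (dL := dL); auto. }
  assert (Hpp : 0 < p).
  { destruct (d_nn X dL HdL _ _ _ Hp) as [h|h]; auto. subst. apply d_eq0 in Hp; auto. subst y.
    exfalso; apply N0; symmetry; apply Ia, G0. }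
  assert (C := nb_core X dL HdL Hgeod Hnb z0 x y y' L p p' ltac:(rewrite (d_sym X dL HdL); auto) HL Hp Hp' Hpp Hle
    ltac:(rewrite (d_sym X dL HdL), BZ; f_equal; lra) ltac:(rewrite (d_sym X dL HdL), BZ'; f_equal; lra)).
  destruct (Grel_sub X dL HdL Gam y' x y (p' - p) p Ga' C ltac:(rewrite (d_sym X dL HdL); auto)
    ltac:(rewrite (d_sym X dL HdL), Hp'; f_equal; lra)) as [G _].
  symmetry; apply Ia, G.
Qed.

Lemma p3b x y y' p p' : Tset dL Gam x -> bset dL Gam x y -> bset dL Gam x y' ->
  dL x y = Fin p -> dL x y' = Fin p' -> p <= p' -> y = y'.
Proof.
  intros [[y0 [G0 N0]] [z0 [Gz Nz]]] [Gb Ib] [Gb' Ib'] Hp Hp' Hle.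
  destruct (align y0 x y G0 Gb) as [L [b2 [BL [B2 BZ]]]].
  destruct (align y0 x y' G0 Gb') as [L' [b2' [BL' [B2' BZ']]]].
  rewrite BL in BL'; apply Fin_inj in BL'; subst L'.
  rewrite Hp in B2; apply Fin_inj in B2; subst b2.
  rewrite Hp' in B2'; apply Fin_inj in B2'; subst b2'.
  assert (HL : 0 < L).
  { destruct (d_nn X dL HdL _ _ _ BL) as [h|h]; auto. subst. exfalso; apply N0; symmetry; apply d_eq0 with (dL := dL); auto. }
  assert (Hpp : 0 < p).
  { destruct (d_nn X dL HdL _ _ _ Hp) as [h|h]; auto. subst. apply d_eq0 in Hp; auto. subst y.
    exfalso; apply Nz; symmetry; apply Ib, Gz. }
  assert (C := nb_core X dL HdL Hgeod Hnb y0 x y y' L p p' BL HL Hp Hp' Hpp Hle BZ BZ').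
  destruct (Grel_sub X dL HdL Gam x y' y p (p' - p) Gb' Hp ltac:(rewrite (d_sym X dL HdL); auto)
    ltac:(rewrite Hp'; f_equal; lra)) as [_ G].
  symmetry; apply Ib, G.
Qed.

Lemma part3 x : Tset dL Gam x ->
  (forall y y', aset dL Gam x y -> aset dL Gam x y' -> y = y') /\
  (forall y y', bset dL Gam x y -> bset dL Gam x y' -> y = y').
Proof.
  intros HT; split; intros y y' H1 H2.
  - destruct (Grel_r X dL Gam y x (proj1 H1)) as [_ [_ [_ [p [_ [_ [_ [Ep _]]]]]]]].
    destruct (Grel_r X dL Gam y' x (proj1 H2)) as [_ [_ [_ [p' [_ [_ [_ [Ep' _]]]]]]]].
    rewrite (d_sym X dL HdL) in Ep, Ep'.
    destruct (Rle_dec p p') as [h|h].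
    + apply (p3a x y y' p p'); auto.
    + symmetry; apply (p3a x y' y p' p); auto; lra.
  - destruct (Grel_r X dL Gam x y (proj1 H1)) as [_ [_ [_ [p [_ [_ [_ [Ep _]]]]]]]].
    destruct (Grel_r X dL Gam x y' (proj1 H2)) as [_ [_ [_ [p' [_ [_ [_ [Ep' _]]]]]]]].
    destruct (Rle_dec p p') as [h|h].
    + apply (p3b x y y' p p'); auto.
    + symmetry; apply (p3b x y' y p' p); auto; lra.
Qed.
End P3.

Theorem proposition3p11
  (X : Type) (d : X -> X -> R) (dL : X -> X -> ER)
  (Hpolish : polish d)
  (HdL : is_ext_distance dL)
  (HdLborel : borel_ext_fun d dL)
  (Hgeod : geodesic_space dL)
  (Hnb : non_branching dL)
  (Hcont : geodesics_d_continuous d dL)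
  (Hloc : geodesics_locally_compact d dL)
  (mu nu : (X -> Prop) -> R) (pi : (X * X -> Prop) -> R)
  (Hmu : is_prob_measure (borel d) mu)
  (Hnu : is_prob_measure (borel d) nu)
  (Hpi : is_prob_measure (borel (pdist d)) pi)
  (Hcoup : is_coupling d mu nu pi)
  (Hcost : finite_cost d dL pi)
  (Gam : X * X -> Prop)
  (Hconc : concentrated_on d pi Gam)
  (HGsc : sigma_compact (pdist d) Gam)
  (HGcm : cyclically_monotone dL Gam)
  (HGfin : forall p, Gam p -> dL (fst p) (snd p) <> PInf) :
  let a := aset dL Gam in
  let b := bset dL Gam in
  let T := Tset dL Gam in
  let Te := Teset dL Gam in
  (* (1) *)
  (sigma_analytic (pdist d) (fun p => a (fst p) (snd p)) /\
   sigma_analytic (pdist d) (fun p => b (fst p) (snd p)) /\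
   forall A : X -> Prop, analytic d A ->
     sigma_analytic d (rimg a A) /\ sigma_analytic d (rimg b A)) /\
  (* (2) *)
  (forall x y, a x y -> b x y -> Te x -> False) /\
  (* (3) *)
  (forall x, T x ->
     (forall y y', a x y -> a x y' -> y = y') /\
     (forall y y', b x y -> b x y' -> y = y')) /\
  (* (4) *)
  (forall y, rimg a T y <-> rimg a Te y) /\
  (forall y, rimg b T y <-> rimg b Te y) /\
  (* (5) *)
  (forall x, Te x <-> T x \/ rimg a T x \/ rimg b T x) /\
  (forall x, T x -> ~ (rimg a T x \/ rimg b T x)).
Proof.
  intros a b T Te. subst a b T Te.
  split; [apply (part1 X d dL Gam Hpolish HdLborel HGsc)|].
  split; [intros; eapply part2; eauto|].
  split; [intros; eapply part3; eauto|].
  split; [intros; eapply part4a; eauto|].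
  split; [intros; eapply part4b; eauto|].
  split; [intros; eapply part5a; eauto|].
  intros; eapply part5b; eauto.
Qed.
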